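(* Let $\textnormal{R}\in\{\textnormal{ML},\textnormal{wML},\textnormal{C},\textnormal{S},\textnormal{CH},\textnormal{wCH}\}$ and let $\omega\in\Omega$ be a path that is $\textnormal{R}$-random for a computable forecasting system $\varphi$. Then $I_\textnormal{R}(\omega)\subseteq I_\varphi(\omega)$, where $I_\varphi(\omega)=\big[\liminf_{n\to\infty}\underline{\varphi}(\omega_{1:n}),\ \limsup_{n\to\infty}\overline{\varphi}(\omega_{1:n})\big]$.
   Context: $\mathcal{X}=\{0,1\}$; $\Omega=\mathcal{X}^{\mathbb{N}}$ (paths); $\mathbb{S}=\bigcup_{n\geq0}\mathcal{X}^n$ (situations), $\square$ empty string, $|s|$ length, $\omega_{1:n}=(\omega_1,\dots,\omega_n)$, $\omega_{1:0}=\square$. $\mathcal{I}$: nonempty closed intervals $I\subseteq[0,1]$. A forecasting system is a map $\varphi:\mathbb{S}\to\mathcal{I}$, $\underline{\varphi}=\min\varphi$, $\overline{\varphi}=\max\varphi$; an interval forecast $I$ is identified with the constant forecasting system $s\mapsto I$. A real map $r$ on a countable effectively encoded set $\mathcal D$ is computable if there is a recursive $q:\mathcal{D}\times\mathbb{N}_0\to\mathbb{Q}$ with $|r(d)-q(d,n)|<2^{-n}$; lower semicomputable if there is a recursive $q$ with $q(d,n+1)\ge q(d,n)$ and $r(d)=\lim_nq(d,n)$. $\varphi$ computable if $\underline\varphi,\overline\varphi$ are. $\overline{E}_I(f)=\max_{p\in I}[pf(1)+(1-p)f(0)]$. A real process $F:\mathbb S\to\mathbb R$ is a supermartingale for $\varphi$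 if $\overline{E}_{\varphi(s)}(F(s\,\cdot)-F(s))\le0$ for all $s$; a test supermartingale if also $F\ge0$, $F(\square)=1$. A multiplier process $D$ maps situations to gambles $\mathcal X\to\mathbb R$, generating $D^{\circledcirc}(x_1,\dots,x_n)=\prod_{k=0}^{n-1}D(x_{1:k})(x_{k+1})$; lower semicomputable if $(s,x)\mapsto D(s)(x)$ is. For path $\omega$ and forecasting system $\varphi$: ML-random if no lower semicomputable test supermartingale $T$ for $\varphi$ has $\limsup_nT(\omega_{1:n})=\infty$; wML-random if no test supermartingale for $\varphi$ of the form $D^{\circledcirc}$, $D$ lower semicomputable, has this; C-random if no computable test supermartingale for $\varphi$ has this; S-random if there is no computable test supermartingale $T$ for $\varphi$ and computable non-decreasing unbounded $\tau:\mathbb N_0\to\mathbb R_{\ge0}$ with $\limsup_n[T(\omega_{1:n})-\tau(n)]\ge0$; CH-random (resp. wCH-random) if for every recursive (resp. recursive and temporal, i.e. depending only on $|s|$) $S:\mathbb S\to\{0,1\}$ with $\sum_{k=0}^{n-1}S(\omega_{1:k})\to\infty$: $\liminf_n \frac{\sum_{k<n}S(\omega_{1:k})[\omega_{k+1}-\underline\varphi(\omega_{1:k})]}{\sum_{k<n}S(\omega_{1:k})}\ge0$ and $\limsup_n \frac{\sum_{k<n}S(\omega_{1:k})[\omega_{k+1}-\overline\varphi(\omega_{1:k})]}{\sum_{k<n}S(\omega_{1:k})}\le0$. $\mathcal I_\textnormal{R}(\omega)=\{I\in\mathcal I:\omega\text{ R-random for }I\}$, $I_\textnormal{R}(\omega)=\bigcap_{I\in\mathcal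 I_\textnormal{R}(\omega)}I$. *)

(* Defs.v *)
From Stdlib Require Import Reals Lra Lia List QArith Qreals.
From Coquelicot Require Import Coquelicot.
Import ListNotations.
Open Scope R_scope.

(* A model of computation: partial recursive functions nat -> nat,          *)
(* via Cantor pairing).  [ev c x y] : program c on input x halts with y.    *)

Definition cpair (a b : nat) : nat := ((a + b) * (a + b + 1)) / 2 + b.

Inductive code : Type :=
| cZero | cSucc | cId | cFst | cSnd
| cPair (f g : code)
| cComp (f g : code)
| cRec (f g : code)
| cMu (f : code).

Inductive ev : code -> nat -> nat -> Prop :=
| ev_zero x : ev cZero x 0
| ev_succ x : ev cSucc x (S x)
| ev_id x : ev cId x x
| ev_fst a b : ev cFst (cpair a b) a
| ev_snd a b : ev cSnd (cpair a b) b
| ev_pair f g x a b : ev f x a -> ev g x b -> ev (cPair f g) x (cpair a b)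
| ev_comp f g x y z : ev g x y -> ev f y z -> ev (cComp f g) x z
| ev_rec0 f g y z : ev f y z -> ev (cRec f g) (cpair 0 y) z
| ev_recS f g n y z w : ev (cRec f g) (cpair n y) z ->
    ev g (cpair n (cpair z y)) w -> ev (cRec f g) (cpair (S n) y) w
| ev_mu f y n : ev f (cpair n y) 0 ->
    (forall m, (m < n)%nat -> exists k, ev f (cpair m y) (S k)) ->
    ev (cMu f) y n.

Definition enc_bool (b : bool) : nat := if b then 1%nat else 0%nat.

(* situations: finite binary strings; x1 is the head of the list *)
Fixpoint enc_sit (s : list bool) : nat :=
  match s with
  | [] => 0%nat
  | b :: s' => S (cpair (enc_bool b) (enc_sit s'))
  end.

Definition enc_sitx (p : list bool * bool) : nat :=
  cpair (enc_sit (fst p)) (enc_bool (snd p)).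

Definition enc_Z (z : Z) : nat :=
  match z with
  | Z0 => 0%nat
  | Zpos p => (2 * Pos.to_nat p)%nat
  | Zneg p => (2 * Pos.to_nat p - 1)%nat
  end.

Definition enc_Q (q : Q) : nat :=
  cpair (enc_Z (Qnum q)) (Pos.to_nat (Qden q) - 1).

Definition computable_map {D : Type} (e : D -> nat) (r : D -> R) : Prop :=
  exists c : code, forall (d : D) (n : nat),
    exists q : Q, ev c (cpair (e d) n) (enc_Q q) /\
                  Rabs (r d - Q2R q) < (/ 2) ^ n.

Definition lower_semicomputable_map {D : Type} (e : D -> nat) (r : D -> R)
  : Prop :=
  exists (c : code) (q : D -> nat -> Q),
    (forall d n, ev c (cpair (e d) n) (enc_Q (q d n))) /\
    (forall d n, Q2R (q d n) <= Q2R (q d (S n))) /\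
    (forall d, is_lim_seq (fun n => Q2R (q d n)) (r d)).

Definition recursive_selection (Sel : list bool -> bool) : Prop :=
  exists c : code, forall s, ev c (enc_sit s) (enc_bool (Sel s)).

Record interval := mkInterval {
  ilo : R; ihi : R;
  interval_ok : 0 <= ilo /\ ilo <= ihi /\ ihi <= 1 }.

Record forecasting_system := mkFS {
  flo : list bool -> R; fhi : list bool -> R;
  fs_ok : forall s, 0 <= flo s /\ flo s <= fhi s /\ fhi s <= 1 }.

Definition const_fs (I : interval) : forecasting_system :=
  mkFS (fun _ => ilo I) (fun _ => ihi I) (fun _ => interval_ok I).

Definition computable_fs (phi : forecasting_system) : Prop :=
  computable_map enc_sit (flo phi) /\ computable_map enc_sit (fhi phi).

(* paths omega : nat -> bool, omega k = omega_{k+1}; prefix omega n = omega_{1:n} *)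
Definition prefix (omega : nat -> bool) (n : nat) : list bool :=
  map omega (seq 0 n).

(* upper expectation of a gamble f : X -> R w.r.t. an interval [a,b]:
   overline{E}(f) = max_{p in [a,b]} (p f(1) + (1-p) f(0)).
   The condition overline{E}(f) <= 0 means every such value is <= 0. *)
Definition upper_exp_nonpos (a b : R) (f : bool -> R) : Prop :=
  forall p, a <= p <= b -> p * f true + (1 - p) * f false <= 0.

Definition supermartingale (phi : forecasting_system) (F : list bool -> R)
  : Prop :=
  forall s, upper_exp_nonpos (flo phi s) (fhi phi s)
              (fun x => F (s ++ [x]) - F s).

Definition test_supermartingale (phi : forecasting_system) (F : list bool -> R)
  : Prop :=
  supermartingale phi F /\ (forall s, 0 <= F s) /\ F [] = 1.

(* D^{circledcirc}(x_1..x_n) = prod_{k<n} D(x_{1:k})(x_{k+1}) *)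
Fixpoint mult_aux (D : list bool -> bool -> R) (h s : list bool) : R :=
  match s with
  | [] => 1
  | x :: s' => D h x * mult_aux D (h ++ [x]) s'
  end.
Definition mult_process (D : list bool -> bool -> R) (s : list bool) : R :=
  mult_aux D [] s.

Definition unbounded_on (T : list bool -> R) (omega : nat -> bool) : Prop :=
  LimSup_seq (fun n => T (prefix omega n)) = p_infty.

Fixpoint rsum (n : nat) (f : nat -> R) : R :=
  match n with
  | O => 0
  | S m => rsum m f + f m
  end.

Inductive rnotion := ML | wML | C | Sch | CH | wCH.

Definition ML_random (phi : forecasting_system) (omega : nat -> bool) : Prop :=
  ~ exists T, test_supermartingale phi T /\
              lower_semicomputable_map enc_sit T /\ unbounded_on T omega.

Definition wML_random (phi : forecasting_system) (omega : nat -> bool) : Prop :=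
  ~ exists D : list bool -> bool -> R,
      lower_semicomputable_map enc_sitx (fun p => D (fst p) (snd p)) /\
      test_supermartingale phi (mult_process D) /\
      unbounded_on (mult_process D) omega.

Definition C_random (phi : forecasting_system) (omega : nat -> bool) : Prop :=
  ~ exists T, test_supermartingale phi T /\
              computable_map enc_sit T /\ unbounded_on T omega.

Definition S_random (phi : forecasting_system) (omega : nat -> bool) : Prop :=
  ~ exists (T : list bool -> R) (tau : nat -> R),
      test_supermartingale phi T /\ computable_map enc_sit T /\
      computable_map (fun n : nat => n) tau /\
      (forall n, 0 <= tau n) /\ (forall n, tau n <= tau (S n)) /\
      is_lim_seq tau p_infty /\
      Rbar_le (Finite 0)
        (LimSup_seq (fun n => T (prefix omega n) - tau n)).

Definition sel_count (Sel : list bool -> bool) (omega : nat -> bool) (n : nat)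
  : R := rsum n (fun k => if Sel (prefix omega k) then 1 else 0).

Definition CH_condition (phi : forecasting_system) (omega : nat -> bool)
  (Sel : list bool -> bool) : Prop :=
  is_lim_seq (sel_count Sel omega) p_infty ->
  Rbar_le (Finite 0)
    (LimInf_seq (fun n =>
       rsum n (fun k => (if Sel (prefix omega k) then 1 else 0) *
              ((if omega k then 1 else 0) - flo phi (prefix omega k)))
       / sel_count Sel omega n)) /\
  Rbar_le
    (LimSup_seq (fun n =>
       rsum n (fun k => (if Sel (prefix omega k) then 1 else 0) *
              ((if omega k then 1 else 0) - fhi phi (prefix omega k)))
       / sel_count Sel omega n)) (Finite 0).

Definition CH_random (phi : forecasting_system) (omega : nat -> bool) : Prop :=
  forall Sel, recursive_selection Sel -> CH_condition phi omega Sel.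

Definition temporal (Sel : list bool -> bool) : Prop :=
  forall s t, length s = length t -> Sel s = Sel t.

Definition wCH_random (phi : forecasting_system) (omega : nat -> bool) : Prop :=
  forall Sel, recursive_selection Sel -> temporal Sel ->
    CH_condition phi omega Sel.

Definition random (Rn : rnotion) : forecasting_system -> (nat -> bool) -> Prop :=
  match Rn with
  | ML => ML_random
  | wML => wML_random
  | C => C_random
  | Sch => S_random
  | CH => CH_random
  | wCH => wCH_random
  end.

(* x belongs to I_R(omega) = intersection of all I with omega R-random for I *)
Definition in_I_R (Rn : rnotion) (omega : nat -> bool) (x : R) : Prop :=
  forall I : interval, random Rn (const_fs I) omega -> ilo I <= x <= ihi I.

Definition in_I_phi (phi : forecasting_system) (omega : nat -> bool) (x : R)
  : Prop :=
  Rbar_le (LimInf_seq (fun n => flo phi (prefix omega n))) (Finite x) /\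
  Rbar_le (Finite x) (LimSup_seq (fun n => fhi phi (prefix omega n))).

(* Main.v *)
Require Import Defs.
From Stdlib Require Import Reals.
From Coquelicot Require Import Coquelicot.
From Stdlib Require Import Reals Lra Lia List QArith Qreals Arith.
From Coquelicot Require Import Coquelicot.
Import ListNotations.
Open Scope nat_scope.

Definition tri (n : nat) : nat := n * (n + 1) / 2.

Lemma tri_S n : tri (S n) = tri n + S n.
Proof.
  unfold tri.
  replace (S n * (S n + 1)) with (n * (n + 1) + S n * 2) by lia.
  rewrite Nat.div_add by lia. lia.
Qed.

Lemma cpair_tri a b : cpair a b = tri (a + b) + b.
Proof. reflexivity. Qed.

Lemma tri_mono n m : (n <= m)%nat -> (tri n <= tri m)%nat.
Proof. induction 1; auto. rewrite tri_S; lia. Qed.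

Lemma cpair_inj a b a' b' : cpair a b = cpair a' b' -> a = a' /\ b = b'.
Proof.
  rewrite !cpair_tri. intros H.
  destruct (lt_eq_lt_dec (a+b) (a'+b')) as [[Hl|He]|Hl].
  - assert (tri (S (a+b)) <= tri (a'+b'))%nat by (apply tri_mono; lia).
    rewrite tri_S in H0. lia.
  - rewrite He in H. lia.
  - assert (tri (S (a'+b')) <= tri (a+b))%nat by (apply tri_mono; lia).
    rewrite tri_S in H0. lia.
Qed.

Fixpoint unpair (x : nat) : nat * nat :=
  match x with
  | O => (0, 0)%nat
  | S x' => let (a, b) := unpair x' in
            match a with O => (S b, 0)%nat | S a' => (a', S b) end
  end.

Lemma cpair_unpair x : cpair (fst (unpair x)) (snd (unpair x)) = x.
Proof.
  induction x as [|x IH]; [reflexivity|].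
  simpl. destruct (unpair x) as [a b]. simpl in *.
  destruct a as [|a]; simpl; rewrite !cpair_tri in *.
  - rewrite ?Nat.add_0_r, ?Nat.add_0_l in *. replace (S b + 0) with (S b) by lia. rewrite tri_S. lia.
  - replace (a + S b)%nat with (S a + b)%nat by lia. lia.
Qed.

Lemma unpair_cpair a b : unpair (cpair a b) = (a, b).
Proof.
  pose proof (cpair_unpair (cpair a b)) as H.
  destruct (unpair (cpair a b)) as [a' b']. simpl in H.
  apply cpair_inj in H. destruct H; subst; auto.
Qed.

Definition pf x := fst (unpair x).
Definition ps x := snd (unpair x).
Lemma pf_cpair a b : pf (cpair a b) = a.
Proof. unfold pf; rewrite unpair_cpair; auto. Qed.
Lemma ps_cpair a b : ps (cpair a b) = b.
Proof. unfold ps; rewrite unpair_cpair; auto. Qed.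
Lemma cpair_pf_ps x : cpair (pf x) (ps x) = x.
Proof. apply cpair_unpair. Qed.
Lemma ps_le x : (ps x <= x)%nat.
Proof. rewrite <- (cpair_pf_ps x) at 2. rewrite cpair_tri. lia. Qed.
Lemma pf_le x : (pf x <= x)%nat.
Proof. rewrite <- (cpair_pf_ps x) at 2. rewrite cpair_tri.
  pose proof (tri_mono (pf x) (pf x + ps x)). assert (pf x <= tri (pf x))%nat.
  { destruct (pf x); [lia|]. rewrite tri_S; lia. } lia. Qed.

Definition cfn (f : nat -> nat) : Prop := exists c, forall x, ev c x (f x).

Lemma cfn_ext f g : cfn f -> (forall x, f x = g x) -> cfn g.
Proof. intros [c H] E. exists c; intros; rewrite <- E; auto. Qed.

Lemma cfn_zero : cfn (fun _ => 0%nat).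
Proof. exists cZero; constructor. Qed.
Lemma cfn_succ : cfn S.
Proof. exists cSucc; constructor. Qed.
Lemma cfn_id : cfn (fun x => x).
Proof. exists cId; constructor. Qed.
Lemma cfn_pf : cfn pf.
Proof. exists cFst; intros x. rewrite <- (cpair_pf_ps x) at 1. constructor. Qed.
Lemma cfn_ps : cfn ps.
Proof. exists cSnd; intros x. rewrite <- (cpair_pf_ps x) at 1. constructor. Qed.
Lemma cfn_pair f g : cfn f -> cfn g -> cfn (fun x => cpair (f x) (g x)).
Proof. intros [c1 H1] [c2 H2]. exists (cPair c1 c2); intros; constructor; auto. Qed.
Lemma cfn_comp f g : cfn f -> cfn g -> cfn (fun x => f (g x)).
Proof. intros [c1 H1] [c2 H2]. exists (cComp c1 c2); intros; econstructor; eauto. Qed.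

Fixpoint prec (f g : nat -> nat) (n y : nat) : nat :=
  match n with
  | O => f y
  | S n' => g (cpair n' (cpair (prec f g n' y) y))
  end.

Lemma cfn_prec f g : cfn f -> cfn g -> cfn (fun x => prec f g (pf x) (ps x)).
Proof.
  intros [c1 H1] [c2 H2]. exists (cRec c1 c2); intros x.
  rewrite <- (cpair_pf_ps x) at 1. generalize (pf x) (ps x). intros n y.
  induction n; simpl; econstructor; eauto.
Qed.

Lemma cfn_const k : cfn (fun _ => k).
Proof. induction k. apply cfn_zero. apply (cfn_comp S (fun _ => k)); auto using cfn_succ. Qed.

Lemma cfn_bin (op : nat -> nat -> nat) f g :
  cfn (fun x => op (pf x) (ps x)) -> cfn f -> cfn g -> cfn (fun x => op (f x) (g x)).
Proof.
  intros Ho Hf Hg.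
  eapply cfn_ext. apply (cfn_comp _ _ Ho (cfn_pair _ _ Hf Hg)).
  intros x; simpl. rewrite pf_cpair, ps_cpair. auto.
Qed.

Lemma cfn_prec2 f g n y : cfn f -> cfn g -> cfn n -> cfn y ->
  cfn (fun x => prec f g (n x) (y x)).
Proof. intros. apply (cfn_bin (prec f g)); auto. apply cfn_prec; auto. Qed.

Lemma cfn_iter F n y : cfn F -> cfn n -> cfn y -> cfn (fun x => Nat.iter (n x) F (y x)).
Proof.
  intros HF Hn Hy.
  eapply cfn_ext. apply (cfn_prec2 (fun y => y) (fun z => F (pf (ps z))) n y); auto.
  all: try (apply cfn_id). all: try (apply cfn_comp; auto; apply cfn_comp; [apply cfn_pf| apply cfn_ps]).
  intros x. cbv beta. generalize (n x) (y x). intros m z. induction m; [reflexivity|].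
  simpl prec. rewrite ps_cpair, pf_cpair, IHm. reflexivity.
Qed.

Lemma cfn_add f g : cfn f -> cfn g -> cfn (fun x => f x + g x)%nat.
Proof.
  intros Hf Hg. eapply cfn_ext. apply (cfn_iter S f g); auto using cfn_succ.
  intros x; simpl. generalize (f x) (g x). intros m z. induction m; simpl; auto.
Qed.

Lemma cfn_mul f g : cfn f -> cfn g -> cfn (fun x => f x * g x)%nat.
Proof.
  intros Hf Hg.
  eapply cfn_ext.
  apply (cfn_prec2 (fun _ => 0%nat) (fun z => pf (ps z) + ps (ps z))%nat f g);
    auto using cfn_zero.
  apply cfn_add; apply cfn_comp; auto using cfn_pf, cfn_ps.
  intros x. cbv beta. generalize (f x) (g x). intros m z. induction m; [reflexivity|].
  simpl prec. rewrite ps_cpair, pf_cpair, ps_cpair, IHm. lia.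
Qed.

Lemma cfn_pred f : cfn f -> cfn (fun x => pred (f x)).
Proof.
  intros Hf. eapply cfn_ext.
  apply (cfn_prec2 (fun _ => 0%nat) pf f (fun _ => 0%nat)); auto using cfn_zero, cfn_pf, cfn_const.
  intros x. cbv beta. destruct (f x); [reflexivity|]. simpl prec. rewrite pf_cpair; auto.
Qed.

Lemma cfn_sub f g : cfn f -> cfn g -> cfn (fun x => f x - g x)%nat.
Proof.
  intros Hf Hg. eapply cfn_ext. apply (cfn_iter pred g f); auto.
  apply cfn_pred, cfn_id.
  intros x. cbv beta. generalize (f x) (g x). intros z m. induction m; simpl Nat.iter; [lia|]. rewrite IHm; lia.
Qed.

Lemma cfn_ifz f g h : cfn f -> cfn g -> cfn h ->
  cfn (fun x => match f x with O => g x | S _ => h x end).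
Proof.
  intros Hf Hg Hh. eapply cfn_ext.
  apply (cfn_prec2 pf (fun z => ps (ps (ps z))) f (fun x => cpair (g x) (h x))); auto using cfn_pf.
  apply cfn_comp; [apply cfn_ps|]. apply cfn_comp; apply cfn_ps.
  apply cfn_pair; auto.
  intros x. cbv beta. destruct (f x); simpl prec. rewrite pf_cpair; auto.
  rewrite !ps_cpair; auto.
Qed.

Definition b2n (b : bool) : nat := if b then 1%nat else 0%nat.

Lemma cfn_if (b : nat -> bool) g h : cfn (fun x => b2n (b x)) -> cfn g -> cfn h ->
  cfn (fun x => if b x then g x else h x).
Proof.
  intros Hb Hg Hh. eapply cfn_ext. apply (cfn_ifz _ h g Hb); auto.
  intros x; cbv beta; destruct (b x); reflexivity.
Qed.

Lemma cfn_leb f g : cfn f -> cfn g -> cfn (fun x => b2n (Nat.leb (f x) (g x))).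
Proof.
  intros Hf Hg. eapply cfn_ext. apply (cfn_ifz (fun x => f x - g x)%nat (fun _ => 1%nat) (fun _ => 0%nat));
   auto using cfn_sub, cfn_const.
  intros x. cbv beta. destruct (Nat.leb (f x) (g x)) eqn:E2; [apply Nat.leb_le in E2|apply Nat.leb_gt in E2];
  destruct (f x - g x)%nat eqn:E; simpl; auto; lia.
Qed.

Lemma cfn_eqb f g : cfn f -> cfn g -> cfn (fun x => b2n (Nat.eqb (f x) (g x))).
Proof.
  intros Hf Hg. eapply cfn_ext.
  apply (cfn_mul (fun x => b2n (Nat.leb (f x) (g x))) (fun x => b2n (Nat.leb (g x) (f x))));
    apply cfn_leb; auto.
  intros x. destruct (Nat.eqb (f x) (g x)) eqn:E.
  apply Nat.eqb_eq in E; rewrite E, Nat.leb_refl; auto.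
  apply Nat.eqb_neq in E. destruct (Nat.leb (f x) (g x)) eqn:E1, (Nat.leb (g x) (f x)) eqn:E2; auto.
  apply Nat.leb_le in E1, E2; lia.
Qed.

Lemma cfn_andb f g : cfn (fun x => b2n (f x)) -> cfn (fun x => b2n (g x)) ->
  cfn (fun x => b2n (f x && g x)).
Proof.
  intros Hf Hg. eapply cfn_ext. apply (cfn_mul _ _ Hf Hg).
  intros x; cbv beta; destruct (f x), (g x); reflexivity.
Qed.

Lemma cfn_negb f : cfn (fun x => b2n (f x)) -> cfn (fun x => b2n (negb (f x))).
Proof.
  intros Hf. eapply cfn_ext. apply (cfn_sub (fun _ => 1%nat) _ (cfn_const 1) Hf).
  intros x; cbv beta; destruct (f x); reflexivity.
Qed.

Lemma cfn_orb f g : cfn (fun x => b2n (f x)) -> cfn (fun x => b2n (g x)) ->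
  cfn (fun x => b2n (f x || g x)).
Proof.
  intros Hf Hg. eapply cfn_ext.
  apply (cfn_negb (fun x => negb (f x) && negb (g x))), cfn_andb; apply cfn_negb; auto.
  intros x; cbv beta; destruct (f x), (g x); reflexivity.
Qed.

Lemma cfn_div2 f : cfn f -> cfn (fun x => f x / 2).
Proof.
  intros Hf.
  pose (st := fun z => match ps z with O => cpair (pf z) 1 | S _ => cpair (S (pf z)) 0 end).
  assert (Hst : cfn st).
  { unfold st. apply cfn_ifz. apply cfn_ps. apply cfn_pair. apply cfn_pf. apply cfn_const.
    apply cfn_pair. apply cfn_comp. apply cfn_succ. apply cfn_pf. apply cfn_const. }
  eapply cfn_ext. apply cfn_comp. apply cfn_pf. apply (cfn_iter st f (fun _ => cpair 0 0) Hst Hf (cfn_const _)).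
  intros x. cbv beta. generalize (f x). intros n.
  assert (forall n, exists q r, Nat.iter n st (cpair 0 0) = cpair q r /\ n = 2*q + r /\ r <= 1).
  { induction n0. exists 0, 0; auto.
    destruct IHn0 as (q & r & E & E1 & E2). simpl Nat.iter. rewrite E. unfold st.
    rewrite ps_cpair, pf_cpair. destruct r.
    - exists q, 1; repeat split; lia.
    - exists (S q), 0; repeat split; lia. }
  destruct (H n) as (q & r & E & E1 & E2). rewrite E, pf_cpair.
  apply (Nat.div_unique n 2 q r); lia.
Qed.
From Stdlib Require Import Reals Lra Lia List QArith Qreals Arith.
Import ListNotations.
Open Scope nat_scope.

Definition consE b e := S (cpair b e).
Definition headE e := pf (pred e).
Definition tailE e := ps (pred e).

Lemma headE_cons b s : headE (enc_sit (b :: s)) = enc_bool b.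
Proof. unfold headE; simpl. apply pf_cpair. Qed.
Lemma tailE_cons b s : tailE (enc_sit (b :: s)) = enc_sit s.
Proof. unfold tailE; simpl. apply ps_cpair. Qed.

Lemma enc_bool_inj a b : enc_bool a = enc_bool b -> a = b.
Proof. destruct a, b; simpl; congruence. Qed.

Lemma enc_sit_inj s t : enc_sit s = enc_sit t -> s = t.
Proof.
  revert t; induction s as [|a s IH]; intros [|b t]; simpl; try congruence.
  intros H. injection H as H. apply cpair_inj in H. destruct H as [H1 H2].
  apply enc_bool_inj in H1. apply IH in H2. congruence.
Qed.

Lemma enc_len s : length s <= enc_sit s.
Proof.
  induction s; simpl; auto. pose proof (ps_le (cpair (enc_bool a) (enc_sit s))).
  rewrite ps_cpair in H. lia.
Qed.

Lemma cfn_headE f : cfn f -> cfn (fun x => headE (f x)).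
Proof. intros. unfold headE. apply cfn_comp. apply cfn_pf. apply cfn_pred. auto. Qed.
Lemma cfn_tailE f : cfn f -> cfn (fun x => tailE (f x)).
Proof. intros. unfold tailE. apply cfn_comp. apply cfn_ps. apply cfn_pred. auto. Qed.
Lemma cfn_consE f g : cfn f -> cfn g -> cfn (fun x => consE (f x) (g x)).
Proof. intros. unfold consE. apply cfn_comp. apply cfn_succ. apply cfn_pair; auto. Qed.

Definition scanstep (G : nat -> nat -> nat) (z : nat) : nat :=
  match pf z with
  | O => z
  | S _ => cpair (tailE (pf z)) (G (headE (pf z)) (ps z))
  end.

Lemma cfn_scanstep G : cfn (fun x => G (pf x) (ps x)) -> cfn (scanstep G).
Proof.
  intros HG. unfold scanstep. apply cfn_ifz. apply cfn_pf. apply cfn_id.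
  apply cfn_pair. apply cfn_tailE, cfn_pf.
  apply (cfn_bin G). auto. apply cfn_headE, cfn_pf. apply cfn_ps.
Qed.

Lemma iter_scan G k s a :
  Nat.iter k (scanstep G) (cpair (enc_sit s) a) =
  cpair (enc_sit (skipn k s))
        (fold_left (fun acc b => G (enc_bool b) acc) (firstn k s) a).
Proof.
  revert s a. induction k; intros s a; [reflexivity|].
  rewrite Nat.iter_succ_r. destruct s as [|b s].
  - unfold scanstep at 2. rewrite pf_cpair. simpl enc_sit.
    clear. induction k; [reflexivity|]. simpl Nat.iter. rewrite IHk.
    unfold scanstep. rewrite pf_cpair. reflexivity.
  - unfold scanstep at 2. rewrite pf_cpair. simpl enc_sit.
    replace (cpair (tailE (S (cpair (enc_bool b) (enc_sit s))))
       (G (headE (S (cpair (enc_bool b) (enc_sit s))))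
          (ps (cpair (S (cpair (enc_bool b) (enc_sit s))) a))))
    with (cpair (enc_sit s) (G (enc_bool b) a)).
    2:{ rewrite ps_cpair. change (S (cpair (enc_bool b) (enc_sit s))) with (enc_sit (b::s)).
        rewrite headE_cons, tailE_cons. reflexivity. }
    rewrite IHk. reflexivity.
Qed.

Lemma iter_scan_inv G (P : nat -> Prop) k r a :
  P a -> (forall h acc, P acc -> P (G h acc)) ->
  exists r' a', Nat.iter k (scanstep G) (cpair r a) = cpair r' a' /\ P a'.
Proof.
  intros Ha HG. induction k. exists r, a; auto.
  destruct IHk as (r' & a' & E & Pa). simpl Nat.iter. rewrite E.
  unfold scanstep. rewrite pf_cpair. destruct r'.
  exists 0, a'; auto. rewrite ps_cpair. eexists _, _; split; [reflexivity|]. auto.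
Qed.

Lemma skipn_len_ge {A} k (s : list A) : length s <= k -> skipn k s = [].
Proof. intros; apply skipn_all2; auto. Qed.

Definition nrm (b : nat) : nat := match b with O => 0 | S _ => 1 end.
Definition rstep := scanstep (fun b acc => consE (nrm b) acc).
Definition revN (e : nat) : nat := ps (Nat.iter e rstep (cpair e 0)).

Lemma cfn_rstep : cfn rstep.
Proof.
  apply cfn_scanstep. apply cfn_consE. unfold nrm. apply cfn_ifz. apply cfn_pf.
  apply cfn_const. apply cfn_const. apply cfn_ps.
Qed.

Lemma cfn_revN f : cfn f -> cfn (fun x => revN (f x)).
Proof.
  intros Hf. unfold revN. apply cfn_comp. apply cfn_ps.
  apply cfn_iter; auto. apply cfn_rstep. apply cfn_pair; auto. apply cfn_const.
Qed.

Lemma fold_rev_enc l acc :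
  fold_left (fun a b => consE (nrm (enc_bool b)) a) l (enc_sit acc) = enc_sit (rev l ++ acc).
Proof.
  revert acc. induction l; intros acc; [reflexivity|]. simpl.
  replace (consE (nrm (enc_bool a)) (enc_sit acc)) with (enc_sit (a :: acc))
    by (destruct a; reflexivity).
  rewrite IHl. rewrite <- app_assoc. reflexivity.
Qed.

Lemma revN_enc s : revN (enc_sit s) = enc_sit (rev s).
Proof.
  unfold revN, rstep. change (cpair (enc_sit s) 0) with (cpair (enc_sit s) (enc_sit [])). rewrite iter_scan.
  rewrite ps_cpair. rewrite firstn_all2 by apply enc_len.
  rewrite fold_rev_enc, app_nil_r. reflexivity.
Qed.

Lemma revN_valid x : exists s, revN x = enc_sit s.
Proof.
  unfold revN, rstep.
  destruct (iter_scan_inv (fun b acc => consE (nrm b) acc) (fun a => exists s, a = enc_sit s) x x 0)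
    as (r' & a' & E & [s Hs]).
  exists []; auto.
  intros h acc [s ->]. exists ((if nrm h =? 0 then false else true) :: s).
  unfold consE; simpl. f_equal. f_equal. destruct h; reflexivity.
  exists s. rewrite E, ps_cpair. auto.
Qed.

Definition sanitize x := revN (revN x).
Lemma sanitize_enc s : sanitize (enc_sit s) = enc_sit s.
Proof. unfold sanitize. rewrite !revN_enc, rev_involutive. auto. Qed.
Lemma sanitize_valid x : exists s, sanitize x = enc_sit s.
Proof. unfold sanitize. destruct (revN_valid x) as [s ->]. rewrite revN_enc. eauto. Qed.
Lemma cfn_sanitize f : cfn f -> cfn (fun x => sanitize (f x)).
Proof. intros. unfold sanitize. do 2 apply cfn_revN. auto. Qed.

Definition takeE j e := revN (ps (Nat.iter j rstep (cpair e 0))).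
Lemma takeE_enc j s : takeE j (enc_sit s) = enc_sit (firstn j s).
Proof.
  unfold takeE, rstep. change (cpair (enc_sit s) 0) with (cpair (enc_sit s) (enc_sit [])). rewrite iter_scan, ps_cpair.
  rewrite fold_rev_enc, app_nil_r, revN_enc, rev_involutive. auto.
Qed.
Lemma cfn_takeE f g : cfn f -> cfn g -> cfn (fun x => takeE (f x) (g x)).
Proof.
  intros Hf Hg. unfold takeE. apply cfn_revN. apply cfn_comp. apply cfn_ps.
  apply cfn_iter; auto. apply cfn_rstep. apply cfn_pair; auto. apply cfn_const.
Qed.

Definition lstep := scanstep (fun _ acc => S acc).
Definition lenE e := ps (Nat.iter e lstep (cpair e 0)).
Lemma fold_len (l : list bool) a : fold_left (fun acc (b : bool) => S acc) l a = length l + a.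
Proof. revert a; induction l; intros; simpl; auto. rewrite IHl; lia. Qed.
Lemma lenE_enc s : lenE (enc_sit s) = length s.
Proof.
  unfold lenE, lstep. rewrite iter_scan, ps_cpair, firstn_all2 by apply enc_len.
  rewrite fold_len. lia.
Qed.
Lemma cfn_lenE f : cfn f -> cfn (fun x => lenE (f x)).
Proof.
  intros Hf. unfold lenE. apply cfn_comp. apply cfn_ps. apply cfn_iter; auto.
  apply cfn_scanstep. apply cfn_comp. apply cfn_succ. apply cfn_ps.
  apply cfn_pair; auto. apply cfn_const.
Qed.
From Stdlib Require Import Reals Lra Lia List QArith Qreals Arith ZArith.
From Stdlib Require Import IndefiniteDescription.
Import ListNotations.
Open Scope nat_scope.

Definition decS (x : nat) : list bool :=
  proj1_sig (constructive_indefinite_description _ (sanitize_valid x)).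
Lemma decS_spec x : sanitize x = enc_sit (decS x).
Proof. unfold decS. destruct (constructive_indefinite_description _ _); auto. Qed.
Lemma decS_enc s : decS (enc_sit s) = s.
Proof. apply enc_sit_inj. rewrite <- decS_spec. apply sanitize_enc. Qed.

Lemma wrap_sit (c : code) (g : list bool -> nat -> nat) :
  (forall s n, ev c (cpair (enc_sit s) n) (g s n)) ->
  cfn (fun x => g (decS (pf x)) (ps x)).
Proof.
  intros H. assert (Hp : cfn (fun x => cpair (sanitize (pf x)) (ps x))).
  { apply cfn_pair. apply cfn_sanitize, cfn_pf. apply cfn_ps. }
  destruct Hp as [c1 H1]. exists (cComp c c1). intros x. econstructor. apply H1.
  rewrite decS_spec. apply H.
Qed.

Definition decB (y : nat) : bool := match y with O => false | S _ => true end.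
Lemma decB_enc b : decB (enc_bool b) = b.
Proof. destruct b; auto. Qed.

Lemma wrap_sitx (c : code) (g : list bool * bool -> nat -> nat) :
  (forall p n, ev c (cpair (enc_sitx p) n) (g p n)) ->
  cfn (fun x => g (decS (pf (pf x)), decB (ps (pf x))) (ps x)).
Proof.
  intros H.
  assert (Hp : cfn (fun x => cpair (cpair (sanitize (pf (pf x))) (nrm (ps (pf x)))) (ps x))).
  { apply cfn_pair. apply cfn_pair. apply cfn_sanitize, cfn_comp; apply cfn_pf.
    unfold nrm. apply cfn_ifz. apply cfn_comp. apply cfn_ps. apply cfn_pf. apply cfn_const. apply cfn_const.
    apply cfn_ps. }
  destruct Hp as [c1 H1]. exists (cComp c c1). intros x. econstructor. apply H1.
  rewrite decS_spec.
  replace (nrm (ps (pf x))) with (enc_bool (decB (ps (pf x)))) by (destruct (ps (pf x)); reflexivity).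
  apply (H (decS (pf (pf x)), decB (ps (pf x)))).
Qed.

Lemma wrap_nat (c : code) (g : nat -> nat -> nat) :
  (forall d n, ev c (cpair d n) (g d n)) -> cfn (fun x => g (pf x) (ps x)).
Proof. intros H. exists c. intros x. rewrite <- (cpair_pf_ps x) at 1. apply H. Qed.

Definition isevenN (z : nat) : bool := Nat.eqb (z - 2 * (z / 2)) 0.

Definition gtE (u v o : nat) : bool :=
  if isevenN (pf o) then Nat.ltb (u * (ps o + 1)) ((pf o / 2) * v) else false.
Definition ltE (u v o : nat) : bool :=
  if isevenN (pf o) then Nat.ltb ((pf o / 2) * v) (u * (ps o + 1)) else true.

Lemma cfn_ltb f g : cfn f -> cfn g -> cfn (fun x => b2n (Nat.ltb (f x) (g x))).
Proof.
  intros Hf Hg. eapply cfn_ext. apply (cfn_leb (fun x => S (f x)) g); auto.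
  apply cfn_comp; auto using cfn_succ.
  intros x; cbv beta. reflexivity.
Qed.

Lemma cfn_isevenN f : cfn f -> cfn (fun x => b2n (isevenN (f x))).
Proof.
  intros Hf. unfold isevenN. apply cfn_eqb. apply cfn_sub; auto. apply cfn_mul.
  apply cfn_const. apply cfn_div2; auto. apply cfn_const.
Qed.

Lemma cfn_gtE u v f : cfn f -> cfn (fun x => b2n (gtE u v (f x))).
Proof.
  intros Hf. unfold gtE. eapply cfn_ext.
  apply (cfn_if (fun x => isevenN (pf (f x)))
          (fun x => b2n (Nat.ltb (u * (ps (f x) + 1)) ((pf (f x) / 2) * v))) (fun _ => 0)).
  apply cfn_isevenN. apply cfn_comp; auto using cfn_pf.
  apply cfn_ltb. apply (cfn_mul (fun _ => u)). apply cfn_const.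
  apply (cfn_add (fun x => ps (f x))). apply cfn_comp; auto using cfn_ps. apply cfn_const.
  apply (cfn_mul (fun x => pf (f x) / 2)). apply (cfn_div2 (fun x => pf (f x))).
  apply cfn_comp; auto using cfn_pf. apply cfn_const.
  apply cfn_const.
  intros x; cbv beta. destruct (isevenN (pf (f x))); reflexivity.
Qed.

Lemma cfn_ltE u v f : cfn f -> cfn (fun x => b2n (ltE u v (f x))).
Proof.
  intros Hf. unfold ltE. eapply cfn_ext.
  apply (cfn_if (fun x => isevenN (pf (f x)))
          (fun x => b2n (Nat.ltb ((pf (f x) / 2) * v) (u * (ps (f x) + 1)))) (fun _ => 1)).
  apply cfn_isevenN. apply cfn_comp; auto using cfn_pf.
  apply cfn_ltb.
  apply (cfn_mul (fun x => pf (f x) / 2)). apply (cfn_div2 (fun x => pf (f x))).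
  apply cfn_comp; auto using cfn_pf. apply cfn_const.
  apply (cfn_mul (fun _ => u)). apply cfn_const.
  apply (cfn_add (fun x => ps (f x))). apply cfn_comp; auto using cfn_ps. apply cfn_const.
  apply cfn_const.
  intros x; cbv beta. destruct (isevenN (pf (f x))); reflexivity.
Qed.

Lemma enc_Z_cases z :
  (exists p, z = Zpos p /\ enc_Z z = 2 * Pos.to_nat p /\ isevenN (enc_Z z) = true /\ enc_Z z / 2 = Pos.to_nat p)
  \/ (z = 0%Z /\ enc_Z z = 0)
  \/ (exists p, z = Zneg p /\ isevenN (enc_Z z) = false).
Proof.
  destruct z as [|p|p].
  - right; left; auto.
  - left. exists p. change (enc_Z (Zpos p)) with (2 * Pos.to_nat p). assert (Hd : 2 * Pos.to_nat p / 2 = Pos.to_nat p).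
    { rewrite Nat.mul_comm. apply Nat.div_mul. lia. }
    repeat split; auto. unfold isevenN. rewrite Hd. apply Nat.eqb_eq. lia.
  - right; right. exists p. split; auto. change (enc_Z (Zneg p)) with (2 * Pos.to_nat p - 1). unfold isevenN.
    pose proof (Pos2Nat.is_pos p).
    set (k := Pos.to_nat p) in *.
    assert (Hd : (2 * k - 1) / 2 = k - 1).
    { symmetry. apply (Nat.div_unique _ 2 (k-1) 1); lia. }
    rewrite Hd. apply Nat.eqb_neq. lia.
Qed.

Lemma Q2R_pos_den q : (0 < IZR (Zpos (Qden q)))%R.
Proof. apply IZR_lt. lia. Qed.

Lemma gtE_spec u v q : 0 < v ->
  gtE u v (enc_Q q) = true <-> (INR u / INR v < Q2R q)%R.
Proof.
  intros Hv. unfold gtE, enc_Q. rewrite pf_cpair, ps_cpair.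
  unfold Q2R. destruct q as [z d]. simpl Qnum; simpl Qden.
  assert (HvR : (0 < INR v)%R) by (apply lt_0_INR; lia).
  assert (HdR : (0 < IZR (Zpos d))%R) by (apply IZR_lt; lia).
  assert (Hd1 : Pos.to_nat d - 1 + 1 = Pos.to_nat d) by lia.
  assert (HdI : IZR (Zpos d) = INR (Pos.to_nat d)).
  { rewrite INR_IZR_INZ. f_equal. lia. }
  destruct (enc_Z_cases z) as [(p & -> & E1 & E2 & E3)|[(-> & E1)|(p & -> & E2)]].
  - rewrite E2, E3, Hd1. rewrite HdI in *.
    assert (HpI : IZR (Zpos p) = INR (Pos.to_nat p)).
    { rewrite INR_IZR_INZ. f_equal. lia. }
    rewrite HpI. split; intros H.
    + apply Nat.ltb_lt in H. apply lt_INR in H. rewrite !mult_INR in H.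
      apply (Rmult_lt_reg_r (INR v * INR (Pos.to_nat d))). nra.
      replace (INR u / INR v * (INR v * INR (Pos.to_nat d)))%R with (INR u * INR (Pos.to_nat d))%R by (field; lra).
      replace (INR (Pos.to_nat p) * / INR (Pos.to_nat d) * (INR v * INR (Pos.to_nat d)))%R
        with (INR (Pos.to_nat p) * INR v)%R by (field; lra). lra.
    + apply Nat.ltb_lt. apply INR_lt. rewrite !mult_INR.
      apply (Rmult_lt_compat_r (INR v * INR (Pos.to_nat d))) in H; [|nra].
      replace (INR u / INR v * (INR v * INR (Pos.to_nat d)))%R with (INR u * INR (Pos.to_nat d))%R in H by (field; lra).
      replace (INR (Pos.to_nat p) * / INR (Pos.to_nat d) * (INR v * INR (Pos.to_nat d)))%R
        with (INR (Pos.to_nat p) * INR v)%R in H by (field; lra). lra.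
  - rewrite E1. simpl. split; intros H. discriminate.
    exfalso. rewrite Rmult_0_l in H. assert (0 <= INR u / INR v)%R.
    { apply Rle_mult_inv_pos; auto. apply pos_INR. } lra.
  - rewrite E2. split; intros H. discriminate. exfalso.
    assert (0 <= INR u / INR v)%R.
    { apply Rle_mult_inv_pos; auto. apply pos_INR. }
    assert (IZR (Zneg p) < 0)%R by (apply IZR_lt; lia).
    assert (IZR (Zneg p) * / IZR (Zpos d) < 0)%R.
    { apply Rmult_neg_pos; auto. apply Rinv_0_lt_compat; auto. }
    lra.
Qed.

Lemma ltE_spec u v q : 0 < v ->
  ltE u v (enc_Q q) = true <-> (Q2R q < INR u / INR v)%R.
Proof.
  intros Hv. unfold ltE, enc_Q. rewrite pf_cpair, ps_cpair.
  unfold Q2R. destruct q as [z d]. simpl Qnum; simpl Qden.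
  assert (HvR : (0 < INR v)%R) by (apply lt_0_INR; lia).
  assert (HdR : (0 < IZR (Zpos d))%R) by (apply IZR_lt; lia).
  assert (Hd1 : Pos.to_nat d - 1 + 1 = Pos.to_nat d) by lia.
  assert (HdI : IZR (Zpos d) = INR (Pos.to_nat d)).
  { rewrite INR_IZR_INZ. f_equal. lia. }
  destruct (enc_Z_cases z) as [(p & -> & E1 & E2 & E3)|[(-> & E1)|(p & -> & E2)]].
  - rewrite E2, E3, Hd1. rewrite HdI in *.
    assert (HpI : IZR (Zpos p) = INR (Pos.to_nat p)).
    { rewrite INR_IZR_INZ. f_equal. lia. }
    rewrite HpI. split; intros H.
    + apply Nat.ltb_lt in H. apply lt_INR in H. rewrite !mult_INR in H.
      apply (Rmult_lt_reg_r (INR v * INR (Pos.to_nat d))). nra.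
      replace (INR u / INR v * (INR v * INR (Pos.to_nat d)))%R with (INR u * INR (Pos.to_nat d))%R by (field; lra).
      replace (INR (Pos.to_nat p) * / INR (Pos.to_nat d) * (INR v * INR (Pos.to_nat d)))%R
        with (INR (Pos.to_nat p) * INR v)%R by (field; lra). lra.
    + apply Nat.ltb_lt. apply INR_lt. rewrite !mult_INR.
      apply (Rmult_lt_compat_r (INR v * INR (Pos.to_nat d))) in H; [|nra].
      replace (INR u / INR v * (INR v * INR (Pos.to_nat d)))%R with (INR u * INR (Pos.to_nat d))%R in H by (field; lra).
      replace (INR (Pos.to_nat p) * / INR (Pos.to_nat d) * (INR v * INR (Pos.to_nat d)))%R
        with (INR (Pos.to_nat p) * INR v)%R in H by (field; lra). lra.
  - rewrite E1. simpl. unfold isevenN. simpl. split; intros H.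
    + rewrite Rmult_0_l. apply Nat.ltb_lt in H. assert (0 < u) by nia.
      apply Rdiv_lt_0_compat; auto. apply lt_0_INR; auto.
    + apply Nat.ltb_lt. rewrite Rmult_0_l in H.
      destruct u. simpl in H. unfold Rdiv in H. rewrite Rmult_0_l in H. lra. lia.
  - rewrite E2. split; intros H; auto.
    assert (0 <= INR u / INR v)%R.
    { apply Rle_mult_inv_pos; auto. apply pos_INR. }
    assert (IZR (Zneg p) < 0)%R by (apply IZR_lt; lia).
    assert (IZR (Zneg p) * / IZR (Zpos d) < 0)%R.
    { apply Rmult_neg_pos; auto. apply Rinv_0_lt_compat; auto. }
    lra.
Qed.

Definition scaleE (P : positive) (o : nat) : nat := cpair (pf o) ((ps o + 1) * Pos.to_nat P - 1).
Definition scaleQ (P : positive) (q : Q) : Q := Qmake (Qnum q) (Qden q * P).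

Lemma scaleE_enc P q : scaleE P (enc_Q q) = enc_Q (scaleQ P q).
Proof.
  unfold scaleE, enc_Q, scaleQ. rewrite pf_cpair, ps_cpair. simpl. f_equal.
  rewrite Pos2Nat.inj_mul. pose proof (Pos2Nat.is_pos (Qden q)).
  replace (Pos.to_nat (Qden q) - 1 + 1) with (Pos.to_nat (Qden q)) by lia. reflexivity.
Qed.

Lemma scaleQ_R P q : Q2R (scaleQ P q) = (Q2R q / IZR (Zpos P))%R.
Proof.
  unfold scaleQ, Q2R. simpl. rewrite Pos2Z.inj_mul, mult_IZR. field.
  split; apply not_0_IZR; lia.
Qed.

Lemma cfn_scaleE P f : cfn f -> cfn (fun x => scaleE P (f x)).
Proof.
  intros Hf. unfold scaleE. apply cfn_pair. apply cfn_comp; auto using cfn_pf.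
  apply cfn_sub. apply cfn_mul. apply cfn_add. apply cfn_comp; auto using cfn_ps.
  apply cfn_const. apply cfn_const. apply cfn_const.
Qed.
From Stdlib Require Import Reals Lra Lia List QArith Qreals Arith ZArith.
Import ListNotations.
Open Scope nat_scope.

Section Search.
Variable safe : list bool -> bool.
Variable safeE : nat -> nat.
Hypothesis HsafeE : cfn safeE.
Hypothesis HsafeE_enc : forall t, safeE (enc_sit t) = b2n (safe t).
Variable w0 : list bool.
Let N := length w0.

Definition extb (s : list bool) : bool :=
  Nat.leb N (length s) && Nat.eqb (enc_sit (firstn N s)) (enc_sit w0).

Fixpoint ks (s : list bool) (j fuel : nat) : nat :=
  match fuel with
  | O => j
  | S f => if (j =? length s) || negb (safe (firstn j s)) then j else ks s (S j) f
  end.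

Definition kf (s : list bool) : nat := ks s N (S (length s)).

Definition kprop (s : list bool) (k : nat) : Prop :=
  N <= k <= length s /\ (forall j, N <= j < k -> safe (firstn j s) = true) /\
  (k < length s -> safe (firstn k s) = false).

Lemma ks_prop s j f : j <= length s -> length s < j + f ->
  j <= ks s j f <= length s /\ (forall i, j <= i < ks s j f -> safe (firstn i s) = true) /\
  (ks s j f < length s -> safe (firstn (ks s j f) s) = false).
Proof.
  revert j. induction f; intros j H1 H2; [lia|]. simpl.
  destruct (j =? length s) eqn:E1; simpl.
  - apply Nat.eqb_eq in E1. repeat split; try lia.
  - apply Nat.eqb_neq in E1. destruct (safe (firstn j s)) eqn:E2; simpl.
    + destruct (IHf (S j)) as (A & B & C); try lia. repeat split; try lia; auto.
      intros i Hi. destruct (Nat.eq_dec i j); [subst; auto|]. apply B; lia.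
    + repeat split; try lia; auto.
Qed.

Lemma kf_prop s : N <= length s -> kprop s (kf s).
Proof. intros H. unfold kf, kprop. apply ks_prop; lia. Qed.

Lemma kprop_unique s k1 k2 : kprop s k1 -> kprop s k2 -> k1 = k2.
Proof.
  intros (A1 & B1 & C1) (A2 & B2 & C2).
  destruct (lt_eq_lt_dec k1 k2) as [[H|H]|H]; auto.
  - specialize (C1 ltac:(lia)). rewrite B2 in C1; [discriminate|lia].
  - specialize (C2 ltac:(lia)). rewrite B1 in C2; [discriminate|lia].
Qed.

Lemma firstn_snoc_le (s : list bool) x j : j <= length s -> firstn j (s ++ [x]) = firstn j s.
Proof. intros H. rewrite firstn_app. replace (j - length s) with 0 by lia. simpl. apply app_nil_r. Qed.

Lemma kf_snoc s x : N <= length s ->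
  kf (s ++ [x]) = (if (kf s =? length s) && safe s then S (length s) else kf s).
Proof.
  intros H. pose proof (kf_prop s H) as Hk.
  apply (kprop_unique (s ++ [x])). apply kf_prop. rewrite length_app; simpl; lia.
  destruct Hk as (A & B & C). unfold kprop.
  rewrite length_app; simpl.
  destruct (kf s =? length s) eqn:E1; simpl.
  - apply Nat.eqb_eq in E1. destruct (safe s) eqn:E2.
    + repeat split; try lia. intros j Hj. rewrite firstn_snoc_le by lia.
      destruct (Nat.eq_dec j (length s)). subst. rewrite firstn_all. auto. apply B; lia.
    + repeat split; try lia. intros j Hj. rewrite firstn_snoc_le by lia. apply B; lia.
      intros _. rewrite E1, firstn_snoc_le, firstn_all by lia. auto.
  - apply Nat.eqb_neq in E1. repeat split; try lia.
    intros j Hj. rewrite firstn_snoc_le by lia. apply B; lia.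
    intros _. rewrite firstn_snoc_le by lia. apply C. lia.
Qed.

Lemma extb_spec s : extb s = true <-> N <= length s /\ firstn N s = w0.
Proof.
  unfold extb. rewrite andb_true_iff, Nat.leb_le, Nat.eqb_eq. split.
  intros [A B]. split; auto. apply enc_sit_inj; auto.
  intros [A B]. rewrite B. auto.
Qed.

Lemma extb_snoc s x : extb s = true -> extb (s ++ [x]) = true.
Proof.
  rewrite !extb_spec. intros [A B]. rewrite length_app. split. lia.
  rewrite firstn_snoc_le; auto.
Qed.

Lemma extb_snoc_false s x : extb s = false -> extb (s ++ [x]) = true -> s ++ [x] = w0.
Proof.
  intros H1 H2. apply extb_spec in H2. destruct H2 as [A B].
  rewrite length_app in A. simpl in A.
  destruct (le_lt_dec N (length s)).
  - exfalso. assert (extb s = true). apply extb_spec. split. lia.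
    rewrite <- B. rewrite firstn_snoc_le by lia. auto. congruence.
  - rewrite firstn_all2 in B. auto. rewrite length_app; simpl; lia.
Qed.

Definition kstep (z : nat) : nat :=
  match ps (ps z) with
  | O => if (pf (ps z) =? lenE (pf z)) || negb (decB (safeE (takeE (pf (ps z)) (pf z))))
         then cpair (pf z) (cpair (pf (ps z)) 1)
         else cpair (pf z) (cpair (S (pf (ps z))) 0)
  | S _ => z
  end.

Definition kE (e : nat) : nat := pf (ps (Nat.iter (S (lenE e)) kstep (cpair e (cpair N 0)))).

Lemma cfn_decB f : cfn f -> cfn (fun x => b2n (decB (f x))).
Proof.
  intros Hf. eapply cfn_ext. apply (cfn_ifz f (fun _ => 0) (fun _ => 1)); auto using cfn_const.
  intros x; cbv beta. destruct (f x); reflexivity.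
Qed.

Lemma cfn_kstep : cfn kstep.
Proof.
  unfold kstep. apply cfn_ifz. apply cfn_comp; apply cfn_ps.
  2: apply cfn_id.
  apply cfn_if.
  - apply cfn_orb. apply cfn_eqb. apply cfn_comp. apply cfn_pf. apply cfn_ps.
    apply cfn_lenE. apply cfn_pf.
    apply cfn_negb. apply cfn_decB. apply cfn_comp. auto.
    apply cfn_takeE. apply cfn_comp. apply cfn_pf. apply cfn_ps. apply cfn_pf.
  - apply cfn_pair. apply cfn_pf. apply cfn_pair. apply cfn_comp. apply cfn_pf. apply cfn_ps. apply cfn_const.
  - apply cfn_pair. apply cfn_pf. apply cfn_pair. apply cfn_comp. apply cfn_succ.
    apply cfn_comp. apply cfn_pf. apply cfn_ps. apply cfn_const.
Qed.

Lemma cfn_kE f : cfn f -> cfn (fun x => kE (f x)).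
Proof.
  intros Hf. unfold kE. apply cfn_comp. apply cfn_pf. apply cfn_comp. apply cfn_ps.
  apply cfn_iter. apply cfn_kstep. apply cfn_comp. apply cfn_succ. apply cfn_lenE. auto.
  apply cfn_pair. auto. apply cfn_const.
Qed.

Lemma decB_b2n b : decB (b2n b) = b.
Proof. destruct b; auto. Qed.

Lemma iter_kstep_done e j m : Nat.iter m kstep (cpair e (cpair j 1)) = cpair e (cpair j 1).
Proof.
  induction m; auto. simpl. rewrite IHm. unfold kstep. rewrite !ps_cpair. auto.
Qed.

Lemma iter_kstep s j m : exists d,
  Nat.iter m kstep (cpair (enc_sit s) (cpair j 0)) = cpair (enc_sit s) (cpair (ks s j m) d).
Proof.
  revert j. induction m; intros j. exists 0; auto.
  rewrite Nat.iter_succ_r. unfold kstep at 2. rewrite !ps_cpair, !pf_cpair.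
  rewrite lenE_enc, takeE_enc, HsafeE_enc, decB_b2n. simpl ks.
  destruct ((j =? length s) || negb (safe (firstn j s))).
  - rewrite iter_kstep_done. eauto.
  - apply IHm.
Qed.

Lemma kE_enc s : kE (enc_sit s) = kf s.
Proof.
  unfold kE, kf. destruct (iter_kstep s N (S (lenE (enc_sit s)))) as [d E].
  rewrite E, ps_cpair, pf_cpair, lenE_enc. auto.
Qed.

Definition extE (e : nat) : bool := Nat.leb N (lenE e) && Nat.eqb (takeE N e) (enc_sit w0).
Lemma extE_enc s : extE (enc_sit s) = extb s.
Proof. unfold extE, extb. rewrite lenE_enc, takeE_enc. auto. Qed.
Lemma cfn_extE f : cfn f -> cfn (fun x => b2n (extE (f x))).
Proof.
  intros Hf. unfold extE. apply cfn_andb. apply cfn_leb. apply cfn_const. apply cfn_lenE; auto.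
  apply cfn_eqb. apply cfn_takeE. apply cfn_const. auto. apply cfn_const.
Qed.

End Search.
From Stdlib Require Import Reals Lra Lia List QArith Qreals Arith ZArith.
From Coquelicot Require Import Coquelicot.
Import ListNotations.
Open Scope R_scope.

Lemma length_prefix w n : length (prefix w n) = n.
Proof. unfold prefix. rewrite length_map, length_seq. auto. Qed.

Lemma firstn_prefix w j n : (j <= n)%nat -> firstn j (prefix w n) = prefix w j.
Proof.
  intros H. unfold prefix. rewrite firstn_map. f_equal.
  replace n with (j + (n - j))%nat by lia. rewrite seq_app, firstn_app, length_seq.
  replace (j - j)%nat with 0%nat by lia. simpl. rewrite app_nil_r.
  apply firstn_all2. rewrite length_seq. lia.
Qed.

Lemma prefix_S w n : prefix w (S n) = prefix w n ++ [w n].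
Proof. unfold prefix. rewrite seq_S, map_app. auto. Qed.

Lemma firstn_snoc (s : list bool) x j : (j <= length s)%nat -> firstn j (s ++ [x]) = firstn j s.
Proof. intros H. rewrite firstn_app. replace (j - length s)%nat with 0%nat by lia. simpl. apply app_nil_r. Qed.

Lemma LimSup_correct u : is_LimSup_seq u (LimSup_seq u).
Proof. unfold LimSup_seq. destruct (ex_LimSup_seq u); auto. Qed.
Lemma LimInf_correct u : is_LimInf_seq u (LimInf_seq u).
Proof. unfold LimInf_seq. destruct (ex_LimInf_seq u); auto. Qed.

Lemma unb_iff u : LimSup_seq u = p_infty <-> forall M N, exists n, (N <= n)%nat /\ M < u n.
Proof.
  split. intros H. pose proof (LimSup_correct u) as C. rewrite H in C. exact C.
  intros H. apply is_LimSup_seq_unique. exact H.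
Qed.

Lemma limsup_ge0_iff u : Rbar_le 0 (LimSup_seq u) <->
  forall eps, 0 < eps -> forall N, exists n, (N <= n)%nat /\ - eps < u n.
Proof.
  pose proof (LimSup_correct u) as C. destruct (LimSup_seq u) as [l| |]; simpl in *; split.
  - intros Hl eps He N. destruct (C (mkposreal eps He)) as [C1 _]. destruct (C1 N) as (n & Hn & Hu).
    exists n; split; auto. simpl in Hu. lra.
  - intros H. destruct (Rle_lt_dec 0 l); auto. exfalso.
    destruct (C (mkposreal (-l/2) ltac:(lra))) as [_ [N HN]]. simpl in HN.
    destruct (H (-l/2) ltac:(lra) N) as (n & Hn & Hu). specialize (HN n Hn). lra.
  - intros _ eps He N. destruct (C (-eps) N) as (n & ? & ?). eauto.
  - auto.
  - intros [].
  - intros H. destruct (C (-1)) as [N HN]. destruct (H 1 ltac:(lra) N) as (n & Hn & Hu).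
    specialize (HN n Hn). lra.
Qed.

Lemma limsup_le0_iff u : Rbar_le (LimSup_seq u) 0 <->
  forall eps, 0 < eps -> exists N, forall n, (N <= n)%nat -> u n < eps.
Proof.
  pose proof (LimSup_correct u) as C. destruct (LimSup_seq u) as [l| |]; simpl in *; split.
  - intros Hl eps He. destruct (C (mkposreal eps He)) as [_ [N HN]]. exists N. intros n Hn.
    specialize (HN n Hn). simpl in HN. lra.
  - intros H. destruct (Rle_lt_dec l 0); auto. exfalso.
    destruct (C (mkposreal (l/2) ltac:(lra))) as [C1 _]. simpl in C1.
    destruct (H (l/2) ltac:(lra)) as [N HN]. destruct (C1 N) as (n & Hn & Hu).
    specialize (HN n Hn). lra.
  - intros [].
  - intros H. exfalso. destruct (H 1 ltac:(lra)) as [N HN]. destruct (C 1 N) as (n & Hn & Hu).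
    specialize (HN n Hn). lra.
  - intros _ eps He. destruct (C eps) as [N HN]. eauto.
  - auto.
Qed.

Lemma liminf_ge0_iff u : Rbar_le 0 (LimInf_seq u) <->
  forall eps, 0 < eps -> exists N, forall n, (N <= n)%nat -> - eps < u n.
Proof.
  pose proof (LimInf_correct u) as C. destruct (LimInf_seq u) as [l| |]; simpl in *; split.
  - intros Hl eps He. destruct (C (mkposreal eps He)) as [_ [N HN]]. exists N. intros n Hn.
    specialize (HN n Hn). simpl in HN. lra.
  - intros H. destruct (Rle_lt_dec 0 l); auto. exfalso.
    destruct (C (mkposreal (-l/2) ltac:(lra))) as [C1 _]. simpl in C1.
    destruct (H (-l/2) ltac:(lra)) as [N HN]. destruct (C1 N) as (n & Hn & Hu).
    specialize (HN n Hn). lra.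
  - intros _ eps He. destruct (C (-eps)) as [N HN]. eauto.
  - auto.
  - intros [].
  - intros H. exfalso. destruct (H 1 ltac:(lra)) as [N HN]. destruct (C (-1) N) as (n & Hn & Hu).
    specialize (HN n Hn). lra.
Qed.

Section GConstr.
Variable phi : forecasting_system.
Variable I : interval.
Variable safe : list bool -> bool.
Hypothesis Hsafe : forall t, safe t = true -> ilo I <= flo phi t /\ fhi phi t <= ihi I.
Variable w0 : list bool.
Hypothesis Hw0 : (1 <= length w0)%nat.

Definition Gf (F : list bool -> R) (c : R) (s : list bool) : R :=
  if extb w0 s then c * F (firstn (kf safe w0 s) s) else 1.

Lemma kf_w0 : kf safe w0 w0 = length w0.
Proof.
  destruct (kf_prop safe w0 w0 ltac:(lia)) as [A _]. lia.
Qed.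

Lemma G_test F c : test_supermartingale (const_fs I) F -> 0 < c -> c * F w0 <= 1 ->
  test_supermartingale phi (Gf F c).
Proof.
  intros (HF1 & HF2 & HF3) Hc Hw. unfold Gf. split; [|split].
  - intros s p Hp. pose proof (fs_ok phi s) as Hok.
    destruct (extb w0 s) eqn:E.
    + assert (HN : (length w0 <= length s)%nat) by (apply extb_spec in E; tauto).
      rewrite !extb_snoc by auto.
      rewrite !kf_snoc by auto.
      destruct ((kf safe w0 s =? length s)%nat && safe s) eqn:E2.
      * apply andb_true_iff in E2. destruct E2 as [E2 E3]. apply Nat.eqb_eq in E2.
        rewrite E2, firstn_all.
        rewrite !firstn_all2 by (rewrite length_app; simpl; lia).
        destruct (Hsafe s E3) as [S1 S2].
        specialize (HF1 s p). simpl in HF1. specialize (HF1 ltac:(lra)).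
        replace (p * (c * F (s ++ [true]) - c * F s) + (1 - p) * (c * F (s ++ [false]) - c * F s))
          with (c * (p * (F (s ++ [true]) - F s) + (1 - p) * (F (s ++ [false]) - F s))) by ring.
        nra.
      * destruct (kf_prop safe w0 s HN) as [A _].
        rewrite !firstn_snoc by lia. lra.
    + assert (Hx : forall x, (if extb w0 (s ++ [x]) then c * F (firstn (kf safe w0 (s ++ [x])) (s ++ [x])) else 1) - 1 <= 0).
      { intros x. destruct (extb w0 (s ++ [x])) eqn:E2; [|lra].
        pose proof (extb_snoc_false w0 s x E E2) as Ew. rewrite Ew, kf_w0, firstn_all. lra. }
      pose proof (Hx true). pose proof (Hx false). nra.
  - intros s. destruct (extb w0 s); [|lra]. specialize (HF2 (firstn (kf safe w0 s) s)). nra.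
  - destruct (extb w0 []) eqn:E; auto. apply extb_spec in E. simpl in E. lia.
Qed.

Lemma G_omega F c w N0 :
  w0 = prefix w N0 -> (forall n, (N0 <= n)%nat -> safe (prefix w n) = true) ->
  forall n, (N0 <= n)%nat -> Gf F c (prefix w n) = c * F (prefix w n).
Proof.
  intros Hw Hs n Hn. unfold Gf.
  assert (HL : length w0 = N0) by (rewrite Hw; apply length_prefix).
  assert (E : extb w0 (prefix w n) = true).
  { apply extb_spec. rewrite length_prefix, HL. split; auto. rewrite firstn_prefix; auto. }
  rewrite E. f_equal. f_equal.
  assert (kf safe w0 (prefix w n) = n).
  { apply (kprop_unique safe w0 (prefix w n)). apply kf_prop. rewrite length_prefix; lia.
    unfold kprop. rewrite length_prefix. repeat split; try lia.
    intros j Hj. rewrite firstn_prefix by lia. apply Hs. lia. }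
  rewrite H. apply firstn_all2. rewrite length_prefix; lia.
Qed.

End GConstr.
From Stdlib Require Import Reals Lra Lia List QArith Qreals Arith ZArith.
From Stdlib Require Import IndefiniteDescription.
From Coquelicot Require Import Coquelicot.
Import ListNotations.
Open Scope R_scope.

Lemma exists_pos_ge x : exists P : positive, x <= IZR (Zpos P).
Proof.
  destruct (archimed x) as [H1 H2]. destruct (Z_le_gt_dec (up x) 0).
  - exists 1%positive. apply IZR_le in l. simpl in *. lra.
  - exists (Z.to_pos (up x)). rewrite Z2Pos.id by lia. lra.
Qed.

Lemma Rbar_mult_pinf c : 0 < c -> Rbar_mult (Finite c) p_infty = p_infty.
Proof.
  intros Hc. unfold Rbar_mult, Rbar_mult'. destruct (Rle_dec 0 c).
  destruct (Rle_lt_or_eq_dec 0 c r). auto. lra. lra.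
Qed.

Lemma choice2 {A B C : Type} (P : A -> B -> C -> Prop) :
  (forall a b, exists c, P a b c) -> exists f : A -> B -> C, forall a b, P a b (f a b).
Proof.
  intros H. exists (fun a b => proj1_sig (constructive_indefinite_description _ (H a b))).
  intros a b. destruct (constructive_indefinite_description _ _). auto.
Qed.

Lemma test_ext phi F G : (forall s, F s = G s) -> test_supermartingale phi F -> test_supermartingale phi G.
Proof.
  intros E (H1 & H2 & H3). split; [|split].
  - intros s p Hp. rewrite <- !E. apply H1; auto.
  - intros s; rewrite <- E; auto.
  - rewrite <- E; auto.
Qed.

Section Transfer.
Variable phi : forecasting_system.
Variable I : interval.
Variable safe : list bool -> bool.
Variable safeE : nat -> nat.
Hypothesis HsafeE : cfn safeE.
Hypothesis HsafeE_enc : forall t, safeE (enc_sit t) = b2n (safe t).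
Hypothesis Hsafe : forall t, safe t = true -> ilo I <= flo phi t /\ fhi phi t <= ihi I.
Variable w : nat -> bool.
Variable N0 : nat.
Hypothesis HN0 : (1 <= N0)%nat.
Hypothesis Hev : forall n, (N0 <= n)%nat -> safe (prefix w n) = true.
Let w0 := prefix w N0.
Lemma Hw0 : (1 <= length w0)%nat.
Proof. unfold w0. rewrite length_prefix. auto. Qed.

Definition qG (qT : list bool -> nat -> Q) (P : positive) (s : list bool) (n : nat) : Q :=
  if extb w0 s then scaleQ P (qT (firstn (kf safe w0 s) s) n) else 1%Q.

Lemma code_G (cT : code) (qT : list bool -> nat -> Q) (P : positive) :
  (forall s n, ev cT (cpair (enc_sit s) n) (enc_Q (qT s n))) ->
  exists c', forall s n, ev c' (cpair (enc_sit s) n) (enc_Q (qG qT P s n)).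
Proof.
  intros H. pose proof (wrap_sit cT (fun s n => enc_Q (qT s n)) H) as Ht. simpl in Ht.
  assert (Hc : cfn (fun x => if extE w0 (pf x) then
     scaleE P (enc_Q (qT (decS (pf (cpair (takeE (kE safeE w0 (pf x)) (pf x)) (ps x))))
                         (ps (cpair (takeE (kE safeE w0 (pf x)) (pf x)) (ps x)))))
     else enc_Q 1%Q)).
  { apply cfn_if. apply cfn_extE. apply cfn_pf.
    apply cfn_scaleE. apply (cfn_comp (fun x => enc_Q (qT (decS (pf x)) (ps x)))). exact Ht.
    apply cfn_pair. apply cfn_takeE. apply cfn_kE; auto. apply cfn_pf. apply cfn_pf. apply cfn_ps.
    apply cfn_const. }
  destruct Hc as [c' Hc']. exists c'. intros s n. specialize (Hc' (cpair (enc_sit s) n)).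
  rewrite !pf_cpair, !ps_cpair, extE_enc in Hc'.
  rewrite (kE_enc safe safeE HsafeE_enc), takeE_enc, decS_enc, scaleE_enc in Hc'.
  unfold qG. destruct (extb w0 s); auto.
Qed.

Lemma qG_R qT P s n : Q2R (qG qT P s n) =
  if extb w0 s then / IZR (Zpos P) * Q2R (qT (firstn (kf safe w0 s) s) n) else 1.
Proof.
  unfold qG. destruct (extb w0 s). rewrite scaleQ_R. unfold Rdiv. ring.
  unfold Q2R; simpl. lra.
Qed.

Lemma G_unb F c : 0 < c -> unbounded_on F w -> unbounded_on (Gf safe w0 F c) w.
Proof.
  unfold unbounded_on. rewrite !unb_iff. intros Hc H M N.
  destruct (H (M / c) (Nat.max N N0)) as (n & Hn & Hu). exists n. split. lia.
  rewrite (G_omega safe w0 Hw0 F c w N0) by (auto; lia).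
  apply (Rmult_lt_compat_l c) in Hu; auto. replace (c * (M / c)) with M in Hu by (field; lra). auto.
Qed.

Lemma ML_transfer : ML_random phi w -> ML_random (const_fs I) w.
Proof.
  intros Hr [T [HT [Hlsc Hunb]]]. apply Hr.
  destruct (exists_pos_ge (T w0)) as [P HP].
  assert (HPpos : 0 < IZR (Zpos P)) by (apply IZR_lt; lia).
  set (c := / IZR (Zpos P)).
  assert (Hc : 0 < c) by (apply Rinv_0_lt_compat; auto).
  exists (Gf safe w0 T c). split; [|split].
  - apply (G_test phi I safe Hsafe w0 Hw0); auto. unfold c. apply (Rmult_le_reg_l (IZR (Zpos P))); auto.
    rewrite <- Rmult_assoc, Rinv_r, Rmult_1_l, Rmult_1_r by lra. auto.
  - destruct Hlsc as (cT & qT & H1 & H2 & H3).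
    destruct (code_G cT qT P H1) as [c' Hc'].
    exists c', (qG qT P). split; [|split]; auto.
    + intros s n. rewrite !(qG_R qT P s _). destruct (extb w0 s); [|lra].
      apply Rmult_le_compat_l; [apply Rlt_le, Rinv_0_lt_compat; auto| apply H2].
    + intros s. unfold Gf. eapply is_lim_seq_ext. intros n. symmetry. apply (qG_R qT P s n).
      destruct (extb w0 s).
      * apply (is_lim_seq_scal_l _ c (T (firstn (kf safe w0 s) s))). auto.
      * apply is_lim_seq_const.
  - apply G_unb; auto.
Qed.

Lemma C_transfer : C_random phi w -> C_random (const_fs I) w.
Proof.
  intros Hr [T [HT [Hcomp Hunb]]]. apply Hr.
  destruct (exists_pos_ge (T w0)) as [P HP].
  assert (HPpos : 1 <= IZR (Zpos P)) by (apply IZR_le; lia).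
  set (c := / IZR (Zpos P)).
  assert (Hc : 0 < c) by (apply Rinv_0_lt_compat; lra).
  assert (Hc1 : c <= 1). { unfold c. rewrite <- Rinv_1. apply Rinv_le_contravar; lra. }
  exists (Gf safe w0 T c). split; [|split].
  - apply (G_test phi I safe Hsafe w0 Hw0); auto. unfold c. apply (Rmult_le_reg_l (IZR (Zpos P))); [lra|].
    rewrite <- Rmult_assoc, Rinv_r, Rmult_1_l, Rmult_1_r by lra. auto.
  - destruct Hcomp as (cT & HcT).
    destruct (choice2 (fun s n q => ev cT (cpair (enc_sit s) n) (enc_Q q) /\ Rabs (T s - Q2R q) < (/ 2) ^ n) HcT)
      as [qT HqT].
    destruct (code_G cT qT P (fun s n => proj1 (HqT s n))) as [c' Hc'].
    exists c'. intros s n. exists (qG qT P s n). split; auto.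
    rewrite (qG_R qT P s n). change (/ IZR (Z.pos P)) with c. unfold Gf. destruct (extb w0 s).
    + destruct (HqT (firstn (kf safe w0 s) s) n) as [_ Ha].
      rewrite <- Rmult_minus_distr_l, Rabs_mult, Rabs_right by lra.
      assert (0 < (/2) ^ n) by (apply pow_lt; lra).
      pose proof (Rabs_pos (T (firstn (kf safe w0 s) s) - Q2R (qT (firstn (kf safe w0 s) s) n))).
      nra.
    + rewrite Rminus_diag, Rabs_R0. apply pow_lt; lra.
  - apply G_unb; auto.
Qed.

Lemma S_transfer : S_random phi w -> S_random (const_fs I) w.
Proof.
  intros Hr (T & tau & HT & Hcomp & Htc & Ht0 & Htm & Htl & Hls). apply Hr.
  destruct (exists_pos_ge (T w0)) as [P HP].
  assert (HPpos : 1 <= IZR (Zpos P)) by (apply IZR_le; lia).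
  set (c := / IZR (Zpos P)).
  assert (Hc : 0 < c) by (apply Rinv_0_lt_compat; lra).
  assert (Hc1 : c <= 1). { unfold c. rewrite <- Rinv_1. apply Rinv_le_contravar; lra. }
  exists (Gf safe w0 T c), (fun n => c * tau n). split; [|split; [|split; [|split; [|split; [|split]]]]].
  - apply (G_test phi I safe Hsafe w0 Hw0); auto. unfold c. apply (Rmult_le_reg_l (IZR (Zpos P))); [lra|].
    rewrite <- Rmult_assoc, Rinv_r, Rmult_1_l, Rmult_1_r by lra. auto.
  - destruct Hcomp as (cT & HcT).
    destruct (choice2 (fun s n q => ev cT (cpair (enc_sit s) n) (enc_Q q) /\ Rabs (T s - Q2R q) < (/ 2) ^ n) HcT)
      as [qT HqT].
    destruct (code_G cT qT P (fun s n => proj1 (HqT s n))) as [c' Hc'].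
    exists c'. intros s n. exists (qG qT P s n). split; auto.
    rewrite (qG_R qT P s n). change (/ IZR (Z.pos P)) with c. unfold Gf. destruct (extb w0 s).
    + destruct (HqT (firstn (kf safe w0 s) s) n) as [_ Ha].
      rewrite <- Rmult_minus_distr_l, Rabs_mult, Rabs_right by lra.
      assert (0 < (/2) ^ n) by (apply pow_lt; lra).
      pose proof (Rabs_pos (T (firstn (kf safe w0 s) s) - Q2R (qT (firstn (kf safe w0 s) s) n))).
      nra.
    + rewrite Rminus_diag, Rabs_R0. apply pow_lt; lra.
  - destruct Htc as (ct & Hct).
    destruct (choice2 (fun d n q => ev ct (cpair d n) (enc_Q q) /\ Rabs (tau d - Q2R q) < (/ 2) ^ n) Hct)
      as [qt Hqt].
    pose proof (wrap_nat ct (fun d n => enc_Q (qt d n)) (fun d n => proj1 (Hqt d n))) as Hw.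
    destruct (cfn_scaleE P _ Hw) as [c' Hc'].
    exists c'. intros d n. exists (scaleQ P (qt d n)). split.
    + specialize (Hc' (cpair d n)). simpl in Hc'. rewrite pf_cpair, ps_cpair, scaleE_enc in Hc'. auto.
    + rewrite scaleQ_R. destruct (Hqt d n) as [_ Ha].
      replace (c * tau d - Q2R (qt d n) / IZR (Zpos P)) with (c * (tau d - Q2R (qt d n)))
        by (unfold c, Rdiv; ring).
      rewrite Rabs_mult, Rabs_right by lra.
      assert (0 < (/2) ^ n) by (apply pow_lt; lra).
      pose proof (Rabs_pos (tau d - Q2R (qt d n))). nra.
  - intros n. specialize (Ht0 n). nra.
  - intros n. specialize (Htm n). nra.
  - pose proof (is_lim_seq_scal_l tau c p_infty Htl). rewrite Rbar_mult_pinf in H; auto.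
  - rewrite limsup_ge0_iff in *. intros eps He N.
    destruct (Hls (eps / c) ltac:(apply Rdiv_lt_0_compat; lra) (Nat.max N N0)) as (n & Hn & Hu).
    exists n. split. lia.
    rewrite (G_omega safe w0 Hw0 T c w N0) by (auto; lia).
    apply (Rmult_lt_compat_l c) in Hu; auto. replace (c * - (eps / c)) with (- eps) in Hu by (field; lra).
    lra.
Qed.

End Transfer.
From Stdlib Require Import Reals Lra Lia List QArith Qreals Arith ZArith.
From Coquelicot Require Import Coquelicot.
Import ListNotations.
Open Scope R_scope.

Lemma mult_aux_snoc D h s x : mult_aux D h (s ++ [x]) = mult_aux D h s * D (h ++ s) x.
Proof.
  revert h. induction s as [|a s IH]; intros h; simpl.
  - rewrite app_nil_r. ring.
  - rewrite IH. rewrite <- app_assoc. simpl. ring.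
Qed.

Lemma mult_snoc D s x : mult_process D (s ++ [x]) = mult_process D s * D s x.
Proof. unfold mult_process. rewrite mult_aux_snoc. auto. Qed.

Section WML.
Variable phi : forecasting_system.
Variable I : interval.
Variable safe : list bool -> bool.
Variable safeE : nat -> nat.
Hypothesis HsafeE : cfn safeE.
Hypothesis HsafeE_enc : forall t, safeE (enc_sit t) = b2n (safe t).
Hypothesis Hsafe : forall t, safe t = true -> ilo I <= flo phi t /\ fhi phi t <= ihi I.
Variable w : nat -> bool.
Variable N0 : nat.
Hypothesis HN0 : (1 <= N0)%nat.
Hypothesis Hev : forall n, (N0 <= n)%nat -> safe (prefix w n) = true.
Let w0 := prefix w N0.
Lemma Hw0' : (1 <= length w0)%nat.
Proof. unfold w0. rewrite length_prefix. auto. Qed.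

Definition condb (s : list bool) : bool :=
  extb w0 s && Nat.eqb (kf safe w0 s) (length s) && safe s.

Definition Dp (D : list bool -> bool -> R) (s : list bool) (x : bool) : R :=
  if condb s then D s x else 1.

Lemma mult_Dp D c : c * mult_process D w0 = 1 ->
  forall s, mult_process (Dp D) s = Gf safe w0 (mult_process D) c s.
Proof.
  intros Hc s. induction s as [|x s IH] using rev_ind.
  - unfold Gf. destruct (extb w0 []) eqn:E. apply extb_spec in E. pose proof Hw0'. simpl in E. lia.
    reflexivity.
  - rewrite mult_snoc, IH. unfold Gf, Dp, condb.
    destruct (extb w0 s) eqn:E.
    + assert (HN : (length w0 <= length s)%nat) by (apply extb_spec in E; tauto).
      rewrite extb_snoc by auto. rewrite kf_snoc by auto.
      rewrite andb_true_l.
      destruct ((kf safe w0 s =? length s)%nat && safe s) eqn:E2.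
      * apply andb_true_iff in E2. destruct E2 as [E2 _]. apply Nat.eqb_eq in E2.
        rewrite E2, firstn_all, firstn_all2 by (rewrite length_app; simpl; lia).
        rewrite mult_snoc. ring.
      * destruct (kf_prop safe w0 s HN) as [A _]. rewrite firstn_snoc by lia. ring.
    + rewrite !andb_false_l. destruct (extb w0 (s ++ [x])) eqn:E2; [|ring].
      pose proof (extb_snoc_false w0 s x E E2) as Ew. rewrite Ew, (kf_w0 safe w0 Hw0'), firstn_all.
      lra.
Qed.

Lemma wML_transfer : wML_random phi w -> wML_random (const_fs I) w.
Proof.
  intros Hr (D & Hlsc & HT & Hunb). apply Hr.
  set (F := mult_process D).
  assert (Hpos : 0 < F w0).
  { destruct HT as (_ & H2 & _). destruct (H2 w0) as [Hp|Hz]; auto. exfalso.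
    assert (Hz' : forall n, (N0 <= n)%nat -> F (prefix w n) = 0).
    { intros n Hn. induction Hn. auto. rewrite prefix_S. unfold F. rewrite mult_snoc.
      unfold F in IHHn. rewrite IHHn. ring. }
    unfold unbounded_on in Hunb. rewrite unb_iff in Hunb.
    destruct (Hunb 0 N0) as (n & Hn & Hu). fold F in Hu. rewrite Hz' in Hu; auto. lra. }
  set (c := / F w0).
  assert (Hc : 0 < c) by (apply Rinv_0_lt_compat; auto).
  assert (Hc1 : c * F w0 = 1) by (unfold c; field; lra).
  exists (Dp D). split; [|split].
  - destruct Hlsc as (cD & qD & H1 & H2 & H3).
    pose proof (wrap_sitx cD (fun p n => enc_Q (qD p n)) H1) as Hw. cbv beta in Hw.
    assert (Hcd : cfn (fun x => if extE w0 (pf (pf x)) && Nat.eqb (kE safeE w0 (pf (pf x))) (lenE (pf (pf x)))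
                                   && decB (safeE (pf (pf x)))
                               then enc_Q (qD (decS (pf (pf x)), decB (ps (pf x))) (ps x))
                               else enc_Q 1%Q)).
    { apply cfn_if.
      - apply cfn_andb. apply cfn_andb. apply cfn_extE. apply cfn_comp; apply cfn_pf.
        apply cfn_eqb. apply cfn_kE; auto. apply cfn_comp; apply cfn_pf. apply cfn_lenE. apply cfn_comp; apply cfn_pf.
        apply cfn_decB. apply cfn_comp; auto. apply cfn_comp; apply cfn_pf.
      - exact Hw.
      - apply cfn_const. }
    destruct Hcd as [c' Hc'].
    exists c', (fun p n => if condb (fst p) then qD p n else 1%Q). split; [|split].
    + intros [s b] n. specialize (Hc' (cpair (enc_sitx (s, b)) n)).
      unfold enc_sitx in Hc'. cbn [fst snd] in Hc'. rewrite !pf_cpair, !ps_cpair in Hc'.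
      rewrite extE_enc, (kE_enc safe safeE HsafeE_enc), lenE_enc, HsafeE_enc, decB_b2n, decS_enc, decB_enc in Hc'.
      unfold enc_sitx. cbn [fst snd]. unfold condb. destruct (extb w0 s && (kf safe w0 s =? length s)%nat && safe s); auto.
    + intros [s b] n. cbn [fst]. destruct (condb s); auto. lra.
    + intros [s b]. cbn [fst snd]. unfold Dp. destruct (condb s). apply (H3 (s, b)).
      apply (is_lim_seq_ext (fun _ => 1)). intros n. unfold Q2R. simpl. lra. apply is_lim_seq_const.
  - apply (test_ext phi (Gf safe w0 F c)). intros s. symmetry. apply mult_Dp; auto.
    apply (G_test phi I safe Hsafe w0 Hw0'); auto. lra.
  - pose proof (G_unb safe w N0 HN0 Hev F c Hc Hunb) as G.
    unfold unbounded_on in *. rewrite unb_iff in *. intros M N. destruct (G M N) as (n & Hn & Hu).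
    exists n. split; auto. rewrite (mult_Dp D c Hc1). auto.
Qed.

End WML.
From Stdlib Require Import Reals Lra Lia List Arith.
From Coquelicot Require Import Coquelicot.
Import ListNotations.
Open Scope R_scope.

Lemma rsum_plus n f g : rsum n (fun k => f k + g k) = rsum n f + rsum n g.
Proof. induction n; simpl; [ring|]. rewrite IHn. ring. Qed.

Lemma rsum_ext n f g : (forall k, f k = g k) -> rsum n f = rsum n g.
Proof. intros H; induction n; simpl; auto. rewrite IHn, H. auto. Qed.

Lemma rsum_minus n f g : rsum n (fun k => f k - g k) = rsum n f - rsum n g.
Proof. induction n; simpl; [ring|]. rewrite IHn. ring. Qed.

Lemma rsum_lb n f N0 : (forall k, -1 <= f k) -> (forall k, (N0 <= k)%nat -> 0 <= f k) ->
  - INR (Nat.min n N0) <= rsum n f.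
Proof.
  intros H1 H2. induction n. simpl. lra.
  change (rsum (S n) f) with (rsum n f + f n).
  destruct (le_lt_dec N0 n).
  - rewrite (Nat.min_r n N0) in IHn by lia. rewrite (Nat.min_r (S n) N0) by lia. specialize (H2 n l). lra.
  - rewrite (Nat.min_l n N0) in IHn by lia. rewrite (Nat.min_l (S n) N0) by lia. rewrite S_INR. specialize (H1 n). lra.
Qed.

Lemma rsum_lb' n f N0 : (forall k, -1 <= f k) -> (forall k, (N0 <= k)%nat -> 0 <= f k) ->
  - INR N0 <= rsum n f.
Proof.
  intros. pose proof (rsum_lb n f N0 H H0). assert (INR (Nat.min n N0) <= INR N0).
  apply le_INR; lia. lra.
Qed.

Lemma cnt_big (cnt : nat -> R) : is_lim_seq cnt p_infty ->
  forall M, exists N, forall n, (N <= n)%nat -> M < cnt n.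
Proof. intros H M. apply is_lim_seq_spec in H. apply (H M). Qed.

Lemma CH_cond_transfer phi I w Sel N0 :
  (forall n, (N0 <= n)%nat -> ilo I <= flo phi (prefix w n) /\ fhi phi (prefix w n) <= ihi I) ->
  CH_condition phi w Sel -> CH_condition (const_fs I) w Sel.
Proof.
  intros HI HC Hlim. destruct (HC Hlim) as [Hlo Hhi]. clear HC.
  set (sg := fun k => if Sel (prefix w k) then 1 else 0).
  set (cnt := sel_count Sel w).
  assert (Hsg : forall k, 0 <= sg k <= 1) by (intros k; unfold sg; destruct (Sel (prefix w k)); lra).
  pose proof (interval_ok I) as HIo.
  split.
  - rewrite liminf_ge0_iff in *. intros eps He.
    destruct (Hlo (eps/2) ltac:(lra)) as [N1 HN1].
    destruct (cnt_big cnt Hlim (2 * INR N0 / eps + 1)) as [N2 HN2].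
    exists (Nat.max N1 N2). intros n Hn. specialize (HN1 n ltac:(lia)). specialize (HN2 n ltac:(lia)).
    simpl. fold sg in HN1 |- *. fold cnt in HN1 |- *.
    assert (HN0 : 0 <= INR N0) by apply pos_INR.
    assert (Hc : 0 < cnt n). { assert (0 <= 2 * INR N0 / eps). apply Rle_mult_inv_pos; lra. lra. }
    set (R := rsum n (fun k => sg k * (flo phi (prefix w k) - ilo I))).
    assert (Hdec : rsum n (fun k => sg k * ((if w k then 1 else 0) - ilo I)) =
                   rsum n (fun k => sg k * ((if w k then 1 else 0) - flo phi (prefix w k))) + R).
    { unfold R. rewrite <- rsum_plus. apply rsum_ext. intros k. ring. }
    assert (HR : - INR N0 <= R).
    { apply rsum_lb'. intros k. specialize (Hsg k). pose proof (fs_ok phi (prefix w k)). nra.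
      intros k Hk. specialize (Hsg k). destruct (HI k Hk). nra. }
    change (- eps < rsum n (fun k => sg k * ((if w k then 1 else 0) - ilo I)) / cnt n).
    change (- (eps/2) < rsum n (fun k => sg k * ((if w k then 1 else 0) - flo phi (prefix w k))) / cnt n) in HN1.
    rewrite Hdec. unfold Rdiv. rewrite Rmult_plus_distr_r.
    assert (R * / cnt n >= - (eps / 2)).
    { apply Rle_ge. apply (Rmult_le_reg_r (cnt n)); auto. rewrite Rmult_assoc, Rinv_l, Rmult_1_r by lra.
      assert (Ha : 2 * INR N0 / eps * eps = 2 * INR N0) by (field; lra).
      assert (Hb : 2 * INR N0 / eps < cnt n) by lra.
      assert (Hd : INR N0 <= eps / 2 * cnt n).
      { apply (Rmult_lt_compat_r eps) in Hb; auto. nra. }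
      nra. }
    unfold Rdiv in HN1. lra.
  - rewrite limsup_le0_iff in *. intros eps He.
    destruct (Hhi (eps/2) ltac:(lra)) as [N1 HN1].
    destruct (cnt_big cnt Hlim (2 * INR N0 / eps + 1)) as [N2 HN2].
    exists (Nat.max N1 N2). intros n Hn. specialize (HN1 n ltac:(lia)). specialize (HN2 n ltac:(lia)).
    simpl. fold sg in HN1 |- *. fold cnt in HN1 |- *.
    assert (HN0 : 0 <= INR N0) by apply pos_INR.
    assert (Hc : 0 < cnt n). { assert (0 <= 2 * INR N0 / eps). apply Rle_mult_inv_pos; lra. lra. }
    set (R := rsum n (fun k => sg k * (ihi I - fhi phi (prefix w k)))).
    assert (Hdec : rsum n (fun k => sg k * ((if w k then 1 else 0) - ihi I)) =
                   rsum n (fun k => sg k * ((if w k then 1 else 0) - fhi phi (prefix w k))) - R).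
    { unfold R. rewrite <- rsum_minus. apply rsum_ext. intros k. ring. }
    assert (HR : - INR N0 <= R).
    { apply rsum_lb'. intros k. specialize (Hsg k). pose proof (fs_ok phi (prefix w k)). nra.
      intros k Hk. specialize (Hsg k). destruct (HI k Hk). nra. }
    change (rsum n (fun k => sg k * ((if w k then 1 else 0) - ihi I)) / cnt n < eps).
    change (rsum n (fun k => sg k * ((if w k then 1 else 0) - fhi phi (prefix w k))) / cnt n < eps/2) in HN1.
    rewrite Hdec. unfold Rdiv. rewrite Rmult_minus_distr_r.
    assert (R * / cnt n >= - (eps / 2)).
    { apply Rle_ge. apply (Rmult_le_reg_r (cnt n)); auto. rewrite Rmult_assoc, Rinv_l, Rmult_1_r by lra.
      assert (Ha : 2 * INR N0 / eps * eps = 2 * INR N0) by (field; lra).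
      assert (Hb : 2 * INR N0 / eps < cnt n) by lra.
      assert (Hd : INR N0 <= eps / 2 * cnt n).
      { apply (Rmult_lt_compat_r eps) in Hb; auto. nra. }
      nra. }
    unfold Rdiv in HN1. lra.
Qed.
From Stdlib Require Import Reals Lra Lia List QArith Qreals Arith ZArith.
From Coquelicot Require Import Coquelicot.
Import ListNotations.
Open Scope R_scope.

Lemma transfer_all Rn phi I safe safeE w N0 :
  cfn safeE -> (forall t, safeE (enc_sit t) = b2n (safe t)) ->
  (forall t, safe t = true -> ilo I <= flo phi t /\ fhi phi t <= ihi I) ->
  (1 <= N0)%nat -> (forall n, (N0 <= n)%nat -> safe (prefix w n) = true) ->
  random Rn phi w -> random Rn (const_fs I) w.
Proof.
  intros H1 H2 H3 H4 H5. destruct Rn; simpl.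
  - apply (ML_transfer phi I safe safeE H1 H2 H3 w N0 H4 H5).
  - apply (wML_transfer phi I safe safeE H1 H2 H3 w N0 H4 H5).
  - apply (C_transfer phi I safe safeE H1 H2 H3 w N0 H4 H5).
  - apply (S_transfer phi I safe safeE H1 H2 H3 w N0 H4 H5).
  - intros Hr Sel HS. apply (CH_cond_transfer phi I w Sel N0); auto.
  - intros Hr Sel HS HT. apply (CH_cond_transfer phi I w Sel N0); auto.
Qed.

Lemma trivial_random Rn phi w : random Rn phi w ->
  random Rn (const_fs (mkInterval 0 1 ltac:(lra))) w.
Proof.
  apply (transfer_all Rn phi _ (fun _ => true) (fun _ => 1%nat) w 1).
  apply cfn_const. auto. intros t _. simpl. pose proof (fs_ok phi t). lra. lia. auto.
Qed.

Lemma liminf_gt x u : Rbar_lt (Finite x) (LimInf_seq u) ->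
  exists y N, x < y /\ forall n, (N <= n)%nat -> y < u n.
Proof.
  pose proof (LimInf_correct u) as C. destruct (LimInf_seq u) as [l| |]; simpl in *; intros H.
  - destruct (C (mkposreal ((l - x)/2) ltac:(lra))) as [_ [N HN]]. simpl in HN.
    exists (l - (l-x)/2), N. split. lra. auto.
  - destruct (C (x + 1)) as [N HN]. exists (x+1), N. split. lra. auto.
  - contradiction.
Qed.

Lemma limsup_lt x u : Rbar_lt (LimSup_seq u) (Finite x) ->
  exists y N, y < x /\ forall n, (N <= n)%nat -> u n < y.
Proof.
  pose proof (LimSup_correct u) as C. destruct (LimSup_seq u) as [l| |]; simpl in *; intros H.
  - destruct (C (mkposreal ((x - l)/2) ltac:(lra))) as [_ [N HN]]. simpl in HN.
    exists (l + (x-l)/2), N. split. lra. auto.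
  - contradiction.
  - destruct (C (x - 1)) as [N HN]. exists (x-1), N. split. lra. auto.
Qed.

Lemma rat_between x1 x2 : 0 <= x1 < x2 -> exists u v : nat, (0 < v)%nat /\ x1 < INR u / INR v < x2.
Proof.
  intros [H0 H]. destruct (INR_archimed (x2 - x1) 1 ltac:(lra)) as [v Hv].
  assert (Hv0 : (0 < v)%nat). { destruct v. simpl in Hv. lra. lia. }
  assert (HvR : 0 < INR v) by (apply lt_0_INR; auto).
  destruct (archimed (x1 * INR v)) as [A1 A2].
  assert (Hup : (0 < up (x1 * INR v))%Z). { apply lt_IZR. nra. }
  exists (Z.to_nat (up (x1 * INR v))), v. split; auto.
  rewrite INR_IZR_INZ, Z2Nat.id by lia.
  split.
  - apply (Rmult_lt_reg_r (INR v)); auto. unfold Rdiv. rewrite Rmult_assoc, Rinv_l, Rmult_1_r by lra. lra.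
  - apply (Rmult_lt_reg_r (INR v)); auto. unfold Rdiv. rewrite Rmult_assoc, Rinv_l, Rmult_1_r by lra. nra.
Qed.

Lemma small_pow eps : 0 < eps -> exists M, (/2) ^ M < eps.
Proof.
  intros He. destruct (pow_lt_1_zero (/2) ltac:(rewrite Rabs_right; lra) eps He) as [M HM].
  exists M. specialize (HM M ltac:(lia)). rewrite Rabs_right in HM; auto.
  apply Rle_ge, pow_le. lra.
Qed.

Lemma approx_code (f : list bool -> R) :
  computable_map enc_sit f ->
  exists (q : list bool -> nat -> Q),
    (forall s n, Rabs (f s - Q2R (q s n)) < (/2) ^ n) /\
    cfn (fun x => enc_Q (q (decS (pf x)) (ps x))).
Proof.
  intros [c Hc].
  destruct (choice2 (fun s n q => ev c (cpair (enc_sit s) n) (enc_Q q) /\ Rabs (f s - Q2R q) < (/ 2) ^ n) Hc)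
    as [q Hq].
  exists q. split. intros; apply Hq.
  apply (wrap_sit c (fun s n => enc_Q (q s n))). intros; apply Hq.
Qed.

Lemma safe_code (q : list bool -> nat -> Q) M (test : nat -> bool) :
  cfn (fun x => enc_Q (q (decS (pf x)) (ps x))) ->
  (forall f, cfn f -> cfn (fun x => b2n (test (f x)))) ->
  exists safeE, cfn safeE /\ forall t, safeE (enc_sit t) = b2n (test (enc_Q (q t M))).
Proof.
  intros Hq Ht.
  exists (fun x => b2n (test (enc_Q (q (decS (pf (cpair x M))) (ps (cpair x M)))))).
  split.
  - apply (Ht (fun x => enc_Q (q (decS (pf (cpair x M))) (ps (cpair x M))))).
    apply (cfn_comp (fun x => enc_Q (q (decS (pf x)) (ps x)))); auto.
    apply cfn_pair. apply cfn_id. apply cfn_const.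
  - intros t. rewrite pf_cpair, ps_cpair, decS_enc. auto.
Qed.

Theorem proposition5 (Rn : rnotion) (phi : forecasting_system)
  (omega : nat -> bool) :
  computable_fs phi -> random Rn phi omega ->
  forall x : R, in_I_R Rn omega x -> in_I_phi phi omega x.
Proof.
  intros [Hclo Hchi] Hr x HxI. split.
  - destruct (Rbar_le_lt_dec (LimInf_seq (fun n => flo phi (prefix omega n))) (Finite x)) as [ok|Hlt]; auto.
    exfalso.
    destruct (Rlt_le_dec x 0) as [Hx0|Hx0].
    + specialize (HxI _ (trivial_random Rn phi omega Hr)). simpl in HxI. lra.
    + destruct (liminf_gt x _ Hlt) as (y & N & Hxy & HN).
      assert (Hy1 : y < 1). { specialize (HN N (Nat.le_refl _)). pose proof (fs_ok phi (prefix omega N)). lra. }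
      destruct (rat_between (x + (y-x)/3) (x + 2*(y-x)/3) ltac:(lra)) as (u & v & Hv & Hb).
      set (b := INR u / INR v) in *.
      destruct (small_pow (Rmin (b - x) (y - b)) ltac:(apply Rmin_glb_lt; lra)) as [M HM].
      assert (HM1 : (/2)^M < b - x) by (eapply Rlt_le_trans; [exact HM| apply Rmin_l]).
      assert (HM2 : (/2)^M < y - b) by (eapply Rlt_le_trans; [exact HM| apply Rmin_r]).
      assert (HMp : 0 < (/2)^M) by (apply pow_lt; lra).
      set (a := b - (/2)^M).
      assert (Ha : 0 <= a /\ a <= 1 /\ 1 <= 1) by (unfold a; lra).
      set (I := mkInterval a 1 Ha).
      destruct (approx_code _ Hclo) as (q & Hq1 & Hq2).
      destruct (safe_code q M (gtE u v) Hq2 (fun f Hf => cfn_gtE u v f Hf)) as (safeE & HsE & HsE2).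
      assert (Hrand : random Rn (const_fs I) omega).
      { apply (transfer_all Rn phi I (fun t => gtE u v (enc_Q (q t M))) safeE omega (Nat.max N 1)); auto.
        - intros t Ht. apply gtE_spec in Ht; auto. fold b in Ht. simpl.
          specialize (Hq1 t M). apply Rabs_def2 in Hq1. pose proof (fs_ok phi t). unfold a. lra.
        - lia.
        - intros n Hn. apply gtE_spec; auto. fold b. specialize (HN n ltac:(lia)).
          specialize (Hq1 (prefix omega n) M). apply Rabs_def2 in Hq1. lra. }
      specialize (HxI I Hrand). simpl in HxI. unfold a in HxI. lra.
  - destruct (Rbar_le_lt_dec (Finite x) (LimSup_seq (fun n => fhi phi (prefix omega n)))) as [ok|Hlt]; auto.
    exfalso.
    destruct (Rlt_le_dec 1 x) as [Hx1|Hx1].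
    + specialize (HxI _ (trivial_random Rn phi omega Hr)). simpl in HxI. lra.
    + destruct (limsup_lt x _ Hlt) as (y & N & Hxy & HN).
      assert (Hy0 : 0 < y). { specialize (HN N (Nat.le_refl _)). pose proof (fs_ok phi (prefix omega N)). lra. }
      destruct (rat_between (y + (x-y)/3) (y + 2*(x-y)/3) ltac:(lra)) as (u & v & Hv & Hb).
      set (b := INR u / INR v) in *.
      destruct (small_pow (Rmin (b - y) (x - b)) ltac:(apply Rmin_glb_lt; lra)) as [M HM].
      assert (HM1 : (/2)^M < b - y) by (eapply Rlt_le_trans; [exact HM| apply Rmin_l]).
      assert (HM2 : (/2)^M < x - b) by (eapply Rlt_le_trans; [exact HM| apply Rmin_r]).
      assert (HMp : 0 < (/2)^M) by (apply pow_lt; lra).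
      set (a := b + (/2)^M).
      assert (Ha : 0 <= 0 /\ 0 <= a /\ a <= 1) by (unfold a; lra).
      set (I := mkInterval 0 a Ha).
      destruct (approx_code _ Hchi) as (q & Hq1 & Hq2).
      destruct (safe_code q M (ltE u v) Hq2 (fun f Hf => cfn_ltE u v f Hf)) as (safeE & HsE & HsE2).
      assert (Hrand : random Rn (const_fs I) omega).
      { apply (transfer_all Rn phi I (fun t => ltE u v (enc_Q (q t M))) safeE omega (Nat.max N 1)); auto.
        - intros t Ht. apply ltE_spec in Ht; auto. fold b in Ht. simpl.
          specialize (Hq1 t M). apply Rabs_def2 in Hq1. pose proof (fs_ok phi t). unfold a. lra.
        - lia.
        - intros n Hn. apply ltE_spec; auto. fold b. specialize (HN n ltac:(lia)).
          specialize (Hq1 (prefix omega n) M). apply Rabs_def2 in Hq1. lra. }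
      specialize (HxI I Hrand). simpl in HxI. unfold a in HxI. lra.
Qed.
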